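(* Let $n\ge1$, let $\Delta\subset\mathbb{R}^n$ be an $n$-simplex with vertices $\mathbf{x}_0,\dots,\mathbf{x}_n$, and let $f\colon\Delta\to\mathbb{R}$ be convex. Let $K,L\subset N=\{0,\dots,n\}$ be disjoint nonempty sets with $\operatorname{card}K=k+1$ and $\operatorname{card}L=l+1$. Then $$\operatorname{Avg}(f,\Delta_{K\cup L})\le \frac{k+1}{k+l+2}\operatorname{Avg}(f,\Delta_K)+\frac{l+1}{k+l+2}\operatorname{Avg}(f,\Delta_L).$$
   Context: $\mathbf{x}_0,\dots,\mathbf{x}_n\in\mathbb{R}^n$ are affinely independent and $\Delta=\operatorname{conv}\{\mathbf{x}_0,\dots,\mathbf{x}_n\}$. For nonempty $K\subset N$ with $\operatorname{card}K=k+1$, $\Delta_K=\operatorname{conv}\{\mathbf{x}_i: i\in K\}$ is a $k$-simplex. For a $k$-simplex $\Sigma$ and integrable $g\colon\Sigma\to\mathbb{R}$, $\operatorname{Avg}(g,\Sigma)=\frac{1}{\operatorname{Vol}_k(\Sigma)}\int_\Sigma g\,d\mathbf{x}$ with respect to $k$-dimensional Lebesgue measure on the affine hull of $\Sigma$; for a $0$-simplex $\{\mathbf{y}\}$, $\operatorname{Avg}(g,\{\mathbf{y}\})=g(\mathbf{y})$. *)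

(* Defs.v *)
From Stdlib Require Import Reals Lra List ClassicalEpsilon Arith Factorial.
Import ListNotations.
Open Scope R_scope.

(* Points of R^n are represented as functions nat -> R; we require that
   the vertices vanish at coordinates >= n (so everything lives in R^n). *)
Definition vec := nat -> R.
Definition vadd (u v : vec) : vec := fun j => u j + v j.
Definition vsub (u v : vec) : vec := fun j => u j - v j.
Definition vscale (a : R) (u : vec) : vec := fun j => a * u j.

(* Total version of the 1-dimensional Riemann integral over [a,b]
   (value 0 if f is not Riemann integrable; never used for integrable data). *)
Definition RInt (f : R -> R) (a b : R) : R :=
  match excluded_middle_informative
          (exists v : R, exists pr : Riemann_integrable f a b, RiemannInt pr = v) with
  | left H => proj1_sig (constructive_indefinite_description _ H)
  | right _ => 0
  end.

(* simplex_int k h s = integral of h over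
   { (t_1,...,t_k) : t_i >= 0, t_1 + ... + t_k <= s }  (Lebesgue measure on R^k),
   computed as an iterated Riemann integral. *)
Fixpoint simplex_int (k : nat) (h : list R -> R) (s : R) : R :=
  match k with
  | O => h []
  | S k' => RInt (fun t => simplex_int k' (fun ts => h (t :: ts)) (s - t)) 0 s
  end.

(* y0 + sum_i t_i (y_i - y0) : affine parametrisation of conv{y0, y1, ..., yk} *)
Fixpoint face_point (y0 : vec) (ys : list vec) (ts : list R) : vec :=
  match ys, ts with
  | y :: ys', t :: ts' => vadd (vscale t (vsub y y0)) (face_point y0 ys' ts')
  | _, _ => y0
  end.

(* Avg(g, conv{y0,...,yk}) for affinely independent y0,...,yk:
   by the affine change of variables t |-> y0 + sum t_i (y_i - y0) (constant
   Jacobian), this equals (1/Vol(T_k)) * integral over the standard simplex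
   T_k, with Vol(T_k) = 1/k!. *)
Definition Avg (g : vec -> R) (ys : list vec) : R :=
  match ys with
  | [] => 0
  | y0 :: rest =>
      INR (fact (length rest)) *
      simplex_int (length rest) (fun ts => g (face_point y0 rest ts)) 1
  end.

Definition affinely_independent (n : nat) (x : nat -> vec) : Prop :=
  forall c : nat -> R,
    sum_f_R0 c n = 0 ->
    (forall j, sum_f_R0 (fun i => c i * x i j) n = 0) ->
    forall i, (i <= n)%nat -> c i = 0.

Definition in_simplex (n : nat) (x : nat -> vec) (p : vec) : Prop :=
  exists lam : nat -> R,
    (forall i, (i <= n)%nat -> 0 <= lam i) /\
    sum_f_R0 lam n = 1 /\
    forall j, p j = sum_f_R0 (fun i => lam i * x i j) n.

Definition convex_on (S : vec -> Prop) (f : vec -> R) : Prop :=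
  forall p q (a : R), S p -> S q -> 0 <= a <= 1 ->
    f (vadd (vscale a p) (vscale (1 - a) q)) <= a * f p + (1 - a) * f q.

(* Main.v *)
Require Import Defs.
From Stdlib Require Import Reals Lra Lia List ClassicalEpsilon Arith Factorial FunctionalExtensionality.
From Coquelicot Require Import Coquelicot.
Import ListNotations.
Open Scope R_scope.
Set Bullet Behavior "Strict Subproofs".

Lemma scalR (c y : R) : scal c y = c * y. Proof. reflexivity. Qed.
Lemma plusR (a b : R) : plus a b = a + b. Proof. reflexivity. Qed.
Lemma minusR (a b : R) : minus a b = a - b. Proof. reflexivity. Qed.
Lemma oppR (a : R) : opp a = - a. Proof. reflexivity. Qed.
Lemma exR_ext (f g : R -> R) a b : (forall x, Rmin a b < x < Rmax a b -> f x = g x) ->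
  ex_RInt f a b -> ex_RInt g a b.
Proof. apply ex_RInt_ext. Qed.
Lemma exR_scal (f : R -> R) a b k : ex_RInt f a b -> ex_RInt (fun y => k * f y) a b.
Proof. apply (ex_RInt_scal f a b k). Qed.
Lemma RR_ext (f g : R -> R) a b : (forall x, Rmin a b < x < Rmax a b -> f x = g x) ->
  RInt f a b = RInt g a b.
Proof. apply RInt_ext. Qed.
Lemma RR_scal (f : R -> R) a b k : ex_RInt f a b -> RInt (fun y => k * f y) a b = k * RInt f a b.
Proof. apply (RInt_scal f a b k). Qed.

Lemma exR_plus (f g : R -> R) a b : ex_RInt f a b -> ex_RInt g a b -> ex_RInt (fun x => f x + g x) a b.
Proof. apply (ex_RInt_plus f g a b). Qed.
Lemma exR_minus (f g : R -> R) a b : ex_RInt f a b -> ex_RInt g a b -> ex_RInt (fun x => f x - g x) a b.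
Proof. apply (ex_RInt_minus f g a b). Qed.
Lemma RR_plus (f g : R -> R) a b : ex_RInt f a b -> ex_RInt g a b ->
  RInt (fun x => f x + g x) a b = RInt f a b + RInt g a b.
Proof. apply (RInt_plus f g a b). Qed.
Lemma RR_minus (f g : R -> R) a b : ex_RInt f a b -> ex_RInt g a b ->
  RInt (fun x => f x - g x) a b = RInt f a b - RInt g a b.
Proof. apply (RInt_minus f g a b). Qed.
Lemma RR_const (c : R) a b : RInt (fun _ => c) a b = c * (b - a).
Proof. rewrite RInt_const. exact (Rmult_comm (b - a) c). Qed.
Lemma exR_const (c : R) a b : ex_RInt (fun _ => c) a b.
Proof. apply ex_RInt_const. Qed.
Lemma RR_Chasles (f : R -> R) a b c : ex_RInt f a b -> ex_RInt f b c ->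
  RInt f a b + RInt f b c = RInt f a c.
Proof. apply (RInt_Chasles f a b c). Qed.

Lemma DR_ex (f : R -> R) a b : ex_RInt f a b -> Defs.RInt f a b = RInt f a b.
Proof.
  intros H. unfold Defs.RInt.
  destruct (excluded_middle_informative _) as [e|n].
  - destruct (constructive_indefinite_description _ e) as [v [pr Hv]]. simpl.
    rewrite <- Hv. symmetry. apply RInt_Reals.
  - exfalso. apply n. exists (RInt f a b). exists (ex_RInt_Reals_0 _ _ _ H).
    symmetry; apply RInt_Reals.
Qed.

Lemma DR_nex (f : R -> R) a b : ~ ex_RInt f a b -> Defs.RInt f a b = 0.
Proof.
  intros H. unfold Defs.RInt.
  destruct (excluded_middle_informative _) as [e|n]; auto.
  exfalso. destruct e as [v [pr _]]. apply H. apply ex_RInt_Reals_1; exact pr.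
Qed.

Lemma DR_ext (f : R -> R) g a b : (forall x, Rmin a b < x < Rmax a b -> f x = g x) ->
  Defs.RInt f a b = Defs.RInt g a b.
Proof.
  intros H. destruct (classic (ex_RInt f a b)) as [Hf|Hf].
  - assert (Hg : ex_RInt g a b) by (eapply ex_RInt_ext; eauto).
    rewrite !DR_ex by auto. apply RInt_ext; auto.
  - assert (Hg : ~ ex_RInt g a b).
    { intro Hg; apply Hf. eapply ex_RInt_ext; [|exact Hg]. intros; symmetry; auto. }
    rewrite !DR_nex by auto. reflexivity.
Qed.

Lemma DR_ext_all (f : R -> R) g a b : (forall x, f x = g x) -> Defs.RInt f a b = Defs.RInt g a b.
Proof. intros H. replace g with f; auto. apply functional_extensionality; auto. Qed.

Lemma ex_RInt_scal_iff (f : R -> R) a b c : c <> 0 ->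
  (ex_RInt (fun x => c * f x) a b <-> ex_RInt f a b).
Proof.
  intros Hc; split; intro H.
  - apply (exR_ext (fun x => /c * (c * f x))).
    + intros. field. auto.
    + apply exR_scal; auto.
  - apply exR_scal; auto.
Qed.

Lemma DR_scal (f : R -> R) a b c : Defs.RInt (fun x => c * f x) a b = c * Defs.RInt f a b.
Proof.
  destruct (Req_dec c 0) as [->|Hc].
  - rewrite Rmult_0_l. rewrite (DR_ext_all _ (fun _ => 0)) by (intros; ring).
    rewrite DR_ex by apply ex_RInt_const. rewrite RInt_const.
    rewrite scalR; ring.
  - destruct (classic (ex_RInt f a b)) as [Hf|Hf].
    + rewrite !DR_ex; auto. 2: apply ex_RInt_scal_iff; auto.
      apply RR_scal; auto.
    + rewrite !DR_nex; auto. ring. rewrite ex_RInt_scal_iff; auto.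
Qed.

Lemma DR_plus (f : R -> R) g a b : ex_RInt f a b -> ex_RInt g a b ->
  Defs.RInt (fun x => f x + g x) a b = Defs.RInt f a b + Defs.RInt g a b.
Proof.
  intros Hf Hg. rewrite !DR_ex; auto.
  - apply (RInt_plus f g a b Hf Hg).
  - apply (ex_RInt_plus f g a b Hf Hg).
Qed.

Lemma DR_le (f : R -> R) g a b : a <= b -> ex_RInt f a b -> ex_RInt g a b ->
  (forall x, a < x < b -> f x <= g x) -> Defs.RInt f a b <= Defs.RInt g a b.
Proof. intros. rewrite !DR_ex; auto. apply RInt_le; auto. Qed.

Lemma DR_point (f : R -> R) a : Defs.RInt f a a = 0.
Proof. rewrite DR_ex by apply ex_RInt_point. exact (RInt_point a f). Qed.

Lemma ex_RInt_comp_lin_iff (f : R -> R) u v a b : u <> 0 ->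
  (ex_RInt (fun y => f (u * y + v)) a b <-> ex_RInt f (u * a + v) (u * b + v)).
Proof.
  intros Hu; split; intro H.
  - set (g := fun y => f (u * y + v)).
    assert (H1 := ex_RInt_comp_lin g (/u) (- v / u) (u * a + v) (u * b + v)).
    replace (/ u * (u * a + v) + - v / u) with a in H1 by (field; auto).
    replace (/ u * (u * b + v) + - v / u) with b in H1 by (field; auto).
    specialize (H1 H).
    apply (exR_ext (fun y => u * (/u * (g (/ u * y + - v / u))))).
    + intros x _. unfold g.
      replace (u * (/ u * x + - v / u) + v) with x by (field; auto). field; auto.
    + apply exR_scal; exact H1.
  - assert (H1 := ex_RInt_comp_lin f u v a b H).
    apply (exR_ext (fun y => /u * (u * f (u * y + v)))).
    + intros x _. field; auto.
    + apply exR_scal; exact H1.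
Qed.

Lemma DR_comp_lin (f : R -> R) u v a b : u <> 0 ->
  Defs.RInt f (u * a + v) (u * b + v) = u * Defs.RInt (fun y => f (u * y + v)) a b.
Proof.
  intros Hu. destruct (classic (ex_RInt f (u * a + v) (u * b + v))) as [H|H].
  - rewrite !DR_ex; auto. 2: apply ex_RInt_comp_lin_iff; auto.
    rewrite <- RInt_comp_lin; auto.
    rewrite <- (RR_scal (fun y => f (u * y + v))).
    + reflexivity.
    + apply ex_RInt_comp_lin_iff; auto.
  - rewrite !DR_nex; auto. ring. rewrite ex_RInt_comp_lin_iff; auto.
Qed.

Lemma DR_scale (f : R -> R) c r : c <> 0 ->
  Defs.RInt f 0 (c * r) = c * Defs.RInt (fun y => f (c * y)) 0 r.
Proof.
  intros Hc. replace 0 with (c * 0 + 0) at 1 by ring.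
  replace (c * r) with (c * r + 0) by ring.
  rewrite DR_comp_lin; auto. f_equal. apply DR_ext_all; intros; f_equal; ring.
Qed.

Lemma DR_swap (f : R -> R) a b : Defs.RInt f b a = - Defs.RInt f a b.
Proof.
  destruct (classic (ex_RInt f a b)) as [E|E].
  - rewrite !DR_ex; auto. 2: apply ex_RInt_swap; auto.
    rewrite <- (opp_RInt_swap f a b E). rewrite oppR. reflexivity.
  - rewrite !DR_nex; auto. ring. intro E'; apply E; apply ex_RInt_swap; auto.
Qed.

Lemma DR_refl (f : R -> R) r : Defs.RInt f 0 r = Defs.RInt (fun y => f (r - y)) 0 r.
Proof.
  assert (H := DR_comp_lin f (-1) r r 0 ltac:(lra)).
  replace (-1 * r + r) with 0 in H by ring. replace (-1 * 0 + r) with r in H by ring.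
  rewrite H.
  rewrite <- (DR_ext_all (fun y => f (-1 * y + r)) (fun y => f (r - y))) by (intros; f_equal; ring).
  rewrite DR_swap. ring.
Qed.

Lemma DR_transl (f : R -> R) a b v : Defs.RInt f (a + v) (b + v) = Defs.RInt (fun y => f (y + v)) a b.
Proof.
  assert (H := DR_comp_lin f 1 v a b ltac:(lra)).
  replace (1 * a + v) with (a + v) in H by ring. replace (1 * b + v) with (b + v) in H by ring.
  rewrite H, Rmult_1_l. apply DR_ext_all; intros; f_equal; ring.
Qed.

Lemma DR_const (c : R) a b : Defs.RInt (fun _ => c) a b = c * (b - a).
Proof. rewrite DR_ex by apply exR_const. apply RR_const. Qed.

Lemma DR_Chasles (f : R -> R) a b c : ex_RInt f a b -> ex_RInt f b c ->
  Defs.RInt f a b + Defs.RInt f b c = Defs.RInt f a c.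
Proof.
  intros H1 H2. rewrite !DR_ex; auto. apply RR_Chasles; auto.
  apply (ex_RInt_Chasles f a b c H1 H2).
Qed.

Lemma DR_minus (f g : R -> R) a b : ex_RInt f a b -> ex_RInt g a b ->
  Defs.RInt (fun x => f x - g x) a b = Defs.RInt f a b - Defs.RInt g a b.
Proof. intros. rewrite !DR_ex; auto. apply RR_minus; auto. apply exR_minus; auto. Qed.

Lemma DR_le_const (f : R -> R) a b K : a <= b -> ex_RInt f a b ->
  (forall x, a < x < b -> f x <= K) -> Defs.RInt f a b <= K * (b - a).
Proof.
  intros. rewrite <- DR_const. apply DR_le; auto. apply exR_const.
Qed.

Lemma DR_ge_const (f : R -> R) a b K : a <= b -> ex_RInt f a b ->
  (forall x, a < x < b -> K <= f x) -> K * (b - a) <= Defs.RInt f a b.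
Proof.
  intros. rewrite <- DR_const. apply DR_le; auto. apply exR_const.
Qed.

Lemma DR_abs_le (f g : R -> R) a b : a <= b -> ex_RInt f a b -> ex_RInt g a b ->
  (forall x, a < x < b -> Rabs (f x) <= g x) -> Rabs (Defs.RInt f a b) <= Defs.RInt g a b.
Proof.
  intros Hab Hf Hg H. apply Rabs_le. split.
  - rewrite <- (Rmult_1_l (Defs.RInt f a b)).
    replace (- Defs.RInt g a b) with (-1 * Defs.RInt g a b) by ring.
    rewrite <- !DR_scal. apply DR_le; auto. apply exR_scal; auto. apply exR_scal; auto.
    intros x Hx. specialize (H x Hx). apply Rabs_le_between in H. lra.
  - apply DR_le; auto. intros x Hx. specialize (H x Hx). apply Rabs_le_between in H. lra.
Qed.

Lemma exR_continuous (f : R -> R) a b : (forall z, Rmin a b <= z <= Rmax a b -> continuous f z) -> ex_RInt f a b.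
Proof. intros H. exact (ex_RInt_continuous f a b H). Qed.

Lemma RR_correct (f : R -> R) a b : ex_RInt f a b -> is_RInt f a b (RInt f a b).
Proof. intros H. exact (RInt_correct f a b H). Qed.

Lemma SF_RI a b (phi : StepFun a b) : Riemann_integrable phi a b.
Proof.
  intro eps. exists phi. exists (mkStepFun (StepFun_P4 a b 0)). split.
  - intros t _. simpl. unfold fct_cte. rewrite Rminus_diag, Rabs_R0. lra.
  - rewrite StepFun_P18. rewrite Rmult_0_l, Rabs_R0. apply cond_pos.
Qed.

Lemma UL_const (c l : R) : Un_cv (fun _ : nat => c) l -> l = c.
Proof.
  intros H. apply UL_sequence with (fun _ : nat => c); auto.
  intros e He. exists 0%nat. intros. unfold R_dist. rewrite Rminus_diag, Rabs_R0. auto.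
Qed.

Lemma SF_val a b (phi : StepFun a b) (pr : Riemann_integrable phi a b) :
  RiemannInt pr = RiemannInt_SF phi.
Proof.
  unfold RiemannInt. destruct (RiemannInt_exists pr RinvN RinvN_cv) as [l Hl].
  apply UL_const.
  apply RiemannInt_P11 with (f := phi) (un := RinvN) (phi1 := fun n => phi_sequence RinvN pr n)
           (psi1 := fun n => proj1_sig (phi_sequence_prop RinvN pr n))
           (psi2 := fun _ => mkStepFun (StepFun_P4 a b 0)); auto.
  - apply RinvN_cv.
  - intro n. apply (proj2_sig (phi_sequence_prop RinvN pr n)).
  - intro n. split.
    + intros t _. simpl. unfold fct_cte. rewrite Rminus_diag, Rabs_R0. lra.
    + rewrite StepFun_P18. rewrite Rmult_0_l, Rabs_R0. apply cond_pos.
Qed.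

Lemma SF_ex a b (phi : StepFun a b) : ex_RInt phi a b /\ RInt phi a b = RiemannInt_SF phi.
Proof.
  split. apply ex_RInt_Reals_1, SF_RI.
  rewrite (RInt_Reals _ _ _ (SF_RI a b phi)). apply SF_val.
Qed.

Lemma closure_ex (f : R -> R) a b : a <= b ->
  (forall eps, 0 < eps -> exists g h : R -> R, ex_RInt g a b /\ ex_RInt h a b /\
     (forall x, a <= x <= b -> Rabs (f x - g x) <= h x) /\ RInt h a b < eps) ->
  ex_RInt f a b.
Proof.
  intros Hab H. apply ex_RInt_Reals_1. intro eps.
  assert (He4 : 0 < eps / 4) by (destruct eps; simpl; lra).
  assert (He8 : 0 < eps / 8) by (destruct eps; simpl; lra).
  destruct (constructive_indefinite_description _ (H (eps/4) He4)) as [g E].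
  destruct (constructive_indefinite_description _ E) as [h [Hg [Hh [Hgh Hint]]]].
  destruct (ex_RInt_Reals_0 _ _ _ Hg (mkposreal _ He4)) as [phig [psig [Hg1 Hg2]]].
  destruct (ex_RInt_Reals_0 _ _ _ Hh (mkposreal _ He8)) as [phih [psih [Hh1 Hh2]]].
  simpl in Hg2, Hh2.
  rewrite Rmin_left in Hg1, Hh1 by auto. rewrite Rmax_right in Hg1, Hh1 by auto.
  exists phig.
  exists (mkStepFun (StepFun_P28 1 (mkStepFun (StepFun_P28 1 phih psih)) psig)).
  assert (Hpt : forall t, a <= t <= b -> Rabs (f t - phig t) <= phih t + 1 * psih t + 1 * psig t).
  { intros t Ht. specialize (Hg1 t Ht). specialize (Hh1 t Ht). specialize (Hgh t Ht).
    replace (f t - phig t) with ((f t - g t) + (g t - phig t)) by ring.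
    eapply Rle_trans. apply Rabs_triang.
    assert (h t <= phih t + psih t).
    { replace (h t) with (phih t + (h t - phih t)) by ring.
      apply Rplus_le_compat_l. eapply Rle_trans. apply RRle_abs. auto. }
    lra. }
  split.
  - intros t Ht. rewrite Rmin_left in Ht by auto. rewrite Rmax_right in Ht by auto.
    simpl. apply Hpt; auto.
  - rewrite !StepFun_P30.
    destruct (SF_ex a b phih) as [E1 V1]. destruct (SF_ex a b psih) as [E2 V2].
    destruct (SF_ex a b psig) as [E3 V3].
    set (psi := mkStepFun (StepFun_P28 1 (mkStepFun (StepFun_P28 1 phih psih)) psig)).
    destruct (SF_ex a b psi) as [E4 V4].
    assert (Hpsi : RiemannInt_SF psi = RiemannInt_SF phih + 1 * RiemannInt_SF psih + 1 * RiemannInt_SF psig).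
    { unfold psi. rewrite !StepFun_P30. reflexivity. }
    assert (L1 : RiemannInt_SF phih <= RInt h a b + RiemannInt_SF psih).
    { rewrite <- V1, <- V2. rewrite <- (RR_plus h psih a b Hh E2).
      apply RInt_le; auto. apply (exR_plus h psih a b Hh E2).
      intros x Hx. specialize (Hh1 x ltac:(lra)).
      replace (phih x) with (h x - (h x - phih x)) by ring.
      assert (Rabs (h x - phih x) >= - (h x - phih x)) by (apply Rle_ge; rewrite <- Rabs_Ropp; apply RRle_abs).
      lra. }
    assert (L0 : 0 <= RiemannInt_SF psi).
    { rewrite <- V4. assert (Z : RInt (fun _ : R => 0) a b = 0) by (rewrite RR_const; apply Rmult_0_l).
      rewrite <- Z.
      apply RInt_le; auto. apply exR_const.
      intros x Hx. unfold psi. simpl. specialize (Hpt x ltac:(lra)).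
      assert (0 <= Rabs (f x - phig x)) by apply Rabs_pos. lra. }
    rewrite Rabs_pos_eq.
    + rewrite Hpsi in L0. apply Rabs_def2 in Hg2. apply Rabs_def2 in Hh2. lra.
    + rewrite Hpsi in L0. lra.
Qed.

Definition cl (y : R) : R := (Rabs y - Rabs (y - 1) + 1) / 2.

Lemma cl_range y : 0 <= cl y <= 1.
Proof. unfold cl. unfold Rabs; repeat destruct Rcase_abs; lra. Qed.
Lemma cl_0 y : y <= 0 -> cl y = 0.
Proof. intros. unfold cl. unfold Rabs; repeat destruct Rcase_abs; lra. Qed.
Lemma cl_1 y : 1 <= y -> cl y = 1.
Proof. intros. unfold cl. unfold Rabs; repeat destruct Rcase_abs; lra. Qed.
Lemma cl_lip y z : Rabs (cl y - cl z) <= Rabs (y - z).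
Proof. unfold cl. unfold Rabs; repeat destruct Rcase_abs; lra. Qed.

Lemma lip_cont (f : R -> R) L x : 0 < L -> (forall y, Rabs (f y - f x) <= L * Rabs (y - x)) ->
  continuity_pt f x.
Proof.
  intros HL H. apply continuity_pt_filterlim.
  intros P [eps HP]. exists (mkposreal (eps / L) ltac:(apply Rdiv_lt_0_compat; [apply cond_pos|auto])).
  intros y Hy. apply HP. unfold ball in *; simpl in *. unfold AbsRing_ball in *; simpl in *.
  unfold abs, minus, plus, opp in *; simpl in *.
  eapply Rle_lt_trans. apply H.
  replace (y + - x) with (y - x) in Hy by ring.
  apply Rlt_le_trans with (L * (eps / L)). apply Rmult_lt_compat_l; auto.
  right; field; lra.
Qed.

Lemma cl_cont_comp (p q : R) x : q <> 0 -> continuity_pt (fun y => cl ((y - p) / q)) x.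
Proof.
  intros Hq. apply lip_cont with (/ Rabs q). apply Rinv_0_lt_compat. apply Rabs_pos_lt; auto.
  intros y. eapply Rle_trans. apply cl_lip.
  replace ((y - p) / q - (x - p) / q) with ((y - x) * / q) by (field; auto).
  rewrite Rabs_mult, Rabs_inv. lra.
Qed.

Lemma locally_zero_cont (g : R -> R) z d : 0 < d -> (forall y, Rabs (y - z) < d -> g y = 0) ->
  continuity_pt g z.
Proof.
  intros Hd H. apply continuity_pt_filterlim.
  intros P [eps HP]. exists (mkposreal d Hd).
  intros y Hy. unfold ball in Hy; simpl in Hy. unfold AbsRing_ball in Hy; simpl in Hy.
  unfold abs, minus, plus, opp in Hy; simpl in Hy.
  rewrite (H y). 2: { replace (y - z) with (y + - z) by ring. exact Hy. }
  rewrite <- (H z). 2: { rewrite Rminus_diag, Rabs_R0; auto. }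
  apply HP. unfold ball; simpl. unfold AbsRing_ball, abs, minus, plus, opp; simpl.
  rewrite Rplus_opp_r, Rabs_R0. apply cond_pos.
Qed.

Lemma cont_ex (f : R -> R) a b : (forall x, continuity_pt f x) -> ex_RInt f a b.
Proof.
  intros H. apply exR_continuous. intros z _. apply continuity_pt_filterlim. auto.
Qed.

Lemma bdd_cont_ex (f : R -> R) a b M : a <= b -> (forall x, a <= x <= b -> Rabs (f x) <= M) ->
  (forall x, a < x < b -> continuity_pt f x) -> ex_RInt f a b.
Proof.
  intros Hab HM Hc. destruct (Req_dec a b) as [<-|Hne]. apply ex_RInt_point.
  assert (Hlt : a < b) by lra.
  apply closure_ex; auto. intros eps Heps.
  set (M1 := Rabs M + 1).
  assert (HM1 : 0 < M1) by (unfold M1; pose proof (Rabs_pos M); lra).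
  set (d := Rmin ((b - a)/4) (eps / (8 * M1))).
  assert (Hd : 0 < d) by (apply Rmin_pos; [lra | apply Rdiv_lt_0_compat; lra]).
  assert (Hd1 : 4 * d <= b - a) by (unfold d; pose proof (Rmin_l ((b-a)/4) (eps/(8*M1))); lra).
  assert (Hd2 : d * (8 * M1) <= eps).
  { unfold d; pose proof (Rmin_r ((b-a)/4) (eps/(8*M1))).
    apply Rmult_le_compat_r with (r := 8 * M1) in H; [|lra].
    replace (eps / (8 * M1) * (8 * M1)) with eps in H by (field; lra). lra. }
  set (c := fun x => cl ((x - (a + d)) / d) * cl ((x - (b - d)) / (- d))).
  assert (cr : forall x, 0 <= c x <= 1).
  { intros x; unfold c. pose proof (cl_range ((x - (a + d)) / d)).
    pose proof (cl_range ((x - (b - d)) / - d)). split; nra. }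
  assert (cz1 : forall x, x <= a + d -> c x = 0).
  { intros x Hx; unfold c. rewrite (cl_0 ((x - (a + d)) / d)). ring.
    apply Rmult_le_reg_r with d; auto. unfold Rdiv. rewrite Rmult_assoc, Rinv_l; lra. }
  assert (cz2 : forall x, b - d <= x -> c x = 0).
  { intros x Hx; unfold c. rewrite (cl_0 ((x - (b - d)) / - d)). ring.
    replace ((x - (b - d)) / - d) with (- ((x - (b - d)) / d)) by (field; lra).
    assert (0 <= (x - (b - d)) / d) by (apply Rdiv_le_0_compat; lra).
    lra. }
  assert (c1 : forall x, a + 2 * d <= x <= b - 2 * d -> c x = 1).
  { intros x Hx; unfold c.
    assert (A1 : 1 <= (x - (a + d)) / d).
    { apply Rmult_le_reg_r with d; auto.
      replace ((x - (a + d)) / d * d) with (x - (a + d)) by (field; lra). lra. }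
    assert (A2 : 1 <= (x - (b - d)) / - d).
    { replace ((x - (b - d)) / - d) with ((b - d - x) / d) by (field; lra).
      apply Rmult_le_reg_r with d; auto.
      replace ((b - d - x) / d * d) with (b - d - x) by (field; lra). lra. }
    rewrite (cl_1 _ A1), (cl_1 _ A2). ring. }
  assert (cc : forall x, continuity_pt c x).
  { intros x. unfold c. apply continuity_pt_mult; apply cl_cont_comp; lra. }
  assert (hc : forall x, continuity_pt (fun x => M1 * (1 - c x)) x).
  { intros x. apply continuity_pt_mult. apply continuity_pt_const. intros u v; auto.
    apply continuity_pt_minus. apply continuity_pt_const. intros u v; auto. apply cc. }
  exists (fun x => c x * f x), (fun x => M1 * (1 - c x)).
  split; [|split; [|split]].
  - apply exR_continuous. intros z Hz. rewrite Rmin_left, Rmax_right in Hz by lra.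
    apply continuity_pt_filterlim.
    destruct (Rlt_dec a z); destruct (Rlt_dec z b).
    + apply continuity_pt_mult; auto.
    + apply locally_zero_cont with d; auto. intros y Hy. rewrite cz2. ring.
      apply Rabs_def2 in Hy. lra.
    + apply locally_zero_cont with d; auto. intros y Hy. rewrite cz1. ring.
      apply Rabs_def2 in Hy. lra.
    + lra.
  - apply cont_ex. auto.
  - intros x Hx. specialize (HM x Hx). specialize (cr x).
    replace (f x - c x * f x) with ((1 - c x) * f x) by ring.
    rewrite Rabs_mult, (Rabs_pos_eq (1 - c x)) by lra.
    assert (M <= M1) by (unfold M1; pose proof (RRle_abs M); lra).
    apply Rmult_le_compat_l with (r := 1 - c x) in HM; [|lra]. nra.
  - assert (ex1 : forall p q, ex_RInt (fun x => 1 - c x) p q).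
    { intros p q. apply cont_ex. intros x. apply continuity_pt_minus; auto. apply continuity_pt_const. intros u v; auto. }
    rewrite <- DR_ex by (apply cont_ex; auto).
    rewrite DR_scal.
    rewrite <- (DR_Chasles _ a (a + 2 * d) b) by auto.
    rewrite <- (DR_Chasles _ (a + 2 * d) (b - 2 * d) b) by auto.
    assert (E1 : Defs.RInt (fun x => 1 - c x) a (a + 2 * d) <= 1 * (a + 2 * d - a)).
    { apply DR_le_const; auto. lra. intros x _. specialize (cr x). lra. }
    assert (E3 : Defs.RInt (fun x => 1 - c x) (b - 2 * d) b <= 1 * (b - (b - 2 * d))).
    { apply DR_le_const; auto. lra. intros x _. specialize (cr x). lra. }
    assert (E2 : Defs.RInt (fun x => 1 - c x) (a + 2 * d) (b - 2 * d) = 0).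
    { rewrite (DR_ext _ (fun _ => 0)). rewrite DR_const. ring.
      intros x Hx. rewrite Rmin_left, Rmax_right in Hx by lra. rewrite c1; lra. }
    rewrite E2. nra.
Qed.

Lemma absb y d : Rabs y <= d -> - d <= y <= d.
Proof. intros; apply Rabs_le_between; auto. Qed.

Definition conv1 (f : R -> R) a b := forall x y l, a <= x <= b -> a <= y <= b -> 0 <= l <= 1 ->
  f (l * x + (1 - l) * y) <= l * f x + (1 - l) * f y.

Lemma conv1_bdd f a b : a <= b -> conv1 f a b -> exists M, forall x, a <= x <= b -> Rabs (f x) <= M.
Proof.
  intros Hab Hc.
  set (U := Rmax (f a) (f b)).
  assert (Hup : forall x, a <= x <= b -> f x <= U).
  { intros x Hx. destruct (Req_dec a b) as [E|E].
    - subst. replace x with b by lra. unfold U; apply Rmax_r.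
    - set (l := (b - x) / (b - a)).
      assert (0 <= l <= 1) by (unfold l; split; [apply Rdiv_le_0_compat; lra|
         apply Rmult_le_reg_r with (b - a); [lra|]; unfold Rdiv; rewrite Rmult_assoc, Rinv_l; lra]).
      assert (Ex : x = l * a + (1 - l) * b) by (unfold l; field; lra).
      rewrite Ex. eapply Rle_trans. apply Hc; auto; lra.
      pose proof (Rmax_l (f a) (f b)). pose proof (Rmax_r (f a) (f b)). fold U in H0, H1. nra. }
  set (m := (a + b) / 2).
  exists (Rmax (Rabs U) (Rabs (2 * f m - U))).
  intros x Hx. apply Rabs_le. split.
  - assert (f m <= / 2 * f x + (1 - / 2) * f (a + b - x)).
    { replace m with (/ 2 * x + (1 - / 2) * (a + b - x)) by (unfold m; field). apply Hc; lra. }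
    pose proof (Hup (a + b - x) ltac:(lra)).
    pose proof (Rmax_r (Rabs U) (Rabs (2 * f m - U))).
    pose proof (Rle_abs (- (2 * f m - U))). rewrite Rabs_Ropp in H2. lra.
  - pose proof (Hup x Hx). pose proof (Rmax_l (Rabs U) (Rabs (2 * f m - U))).
    pose proof (RRle_abs U). lra.
Qed.

Lemma conv1_modulus f a b M x0 d : conv1 f a b -> (forall x, a <= x <= b -> Rabs (f x) <= M) ->
  0 < d -> a <= x0 - d -> x0 + d <= b ->
  forall x, Rabs (x - x0) <= d -> Rabs (f x - f x0) <= 2 * M * Rabs (x - x0) / d.
Proof.
  intros Hc HM Hd H1 H2 x Hx.
  destruct (Req_dec x x0) as [E|E].
  { subst. rewrite !Rminus_diag, !Rabs_R0. replace (2 * M * 0 / d) with 0 by (field; lra). lra. }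
  set (r := Rabs (x - x0)).
  assert (Hr : 0 < r) by (apply Rabs_pos_lt; lra).
  set (q := x0 + d / r * (x - x0)).
  set (q' := x0 - d / r * (x - x0)).
  assert (Hq : Rabs (q - x0) = d).
  { unfold q. replace (x0 + d / r * (x - x0) - x0) with (d / r * (x - x0)) by ring.
    rewrite Rabs_mult. rewrite (Rabs_pos_eq (d / r)) by (apply Rdiv_le_0_compat; lra).
    fold r. field. lra. }
  assert (Hq' : Rabs (q' - x0) = d).
  { unfold q'. replace (x0 - d / r * (x - x0) - x0) with (- (d / r * (x - x0))) by ring.
    rewrite Rabs_Ropp, Rabs_mult. rewrite (Rabs_pos_eq (d / r)) by (apply Rdiv_le_0_compat; lra).
    fold r. field. lra. }
  apply Req_le, absb in Hq. apply Req_le, absb in Hq'.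
  assert (Hrd : r <= d) by auto.
  assert (Hxb : a <= x <= b) by (pose proof (absb _ _ Hx); lra).
  assert (A1 : f x <= r / d * f q + (1 - r / d) * f x0).
  { replace x with (r / d * q + (1 - r / d) * x0) at 1 by (unfold q; field; lra).
    apply Hc; try lra. split. apply Rdiv_le_0_compat; lra.
    apply Rmult_le_reg_r with d; auto. unfold Rdiv; rewrite Rmult_assoc, Rinv_l; lra. }
  assert (A2 : f x0 <= d / (d + r) * f x + (1 - d / (d + r)) * f q').
  { replace x0 with (d / (d + r) * x + (1 - d / (d + r)) * q') at 1 by (unfold q'; field; lra).
    apply Hc; try lra. split. apply Rdiv_le_0_compat; lra.
    apply Rmult_le_reg_r with (d + r); [lra|]. unfold Rdiv; rewrite Rmult_assoc, Rinv_l; lra. }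
  pose proof (HM q ltac:(lra)). pose proof (HM q' ltac:(lra)). pose proof (HM x0 ltac:(lra)).
  pose proof (HM x ltac:(apply absb in Hx; lra)).
  apply Rabs_le_between in H. apply Rabs_le_between in H0. apply Rabs_le_between in H3.
  apply Rabs_le_between in H4.
  apply Rabs_le. split.
  -
    assert (B : (d + r) * f x0 <= d * f x + r * f q').
    { replace (d * f x + r * f q') with ((d + r) * (d / (d + r) * f x + (1 - d / (d + r)) * f q')) by (field; lra).
      apply Rmult_le_compat_l; lra. }
    assert (r * (f q' - f x0) <= r * (2 * M)) by (apply Rmult_le_compat_l; lra).
    apply Rmult_le_reg_r with d; auto.
    replace (- (2 * M * r / d) * d) with (- (2 * M * r)) by (field; lra). nra.
  - assert (B : d * f x <= r * f q + (d - r) * f x0).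
    { replace (r * f q + (d - r) * f x0) with (d * (r / d * f q + (1 - r / d) * f x0)) by (field; lra).
      apply Rmult_le_compat_l; lra. }
    assert (r * (f q - f x0) <= r * (2 * M)) by (apply Rmult_le_compat_l; lra).
    apply Rmult_le_reg_r with d; auto.
    replace (2 * M * r / d * d) with (2 * M * r) by (field; lra). nra.
Qed.

Lemma conv1_cont f a b x0 : conv1 f a b -> a < x0 < b -> continuity_pt f x0.
Proof.
  intros Hc Hx0. destruct (conv1_bdd f a b ltac:(lra) Hc) as [M HM].
  set (d := Rmin (x0 - a) (b - x0)).
  assert (Hd : 0 < d) by (apply Rmin_pos; lra).
  assert (M0 : 0 <= M) by (pose proof (HM x0 ltac:(lra)); pose proof (Rabs_pos (f x0)); lra).
  pose proof (Rmin_l (x0 - a) (b - x0)). pose proof (Rmin_r (x0 - a) (b - x0)). fold d in H, H0.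
  apply continuity_pt_filterlim. intros P [eps HP].
  set (e := Rmin d (eps * d / (2 * M + 1))).
  assert (He : 0 < e) by (apply Rmin_pos; auto; apply Rdiv_lt_0_compat; [apply Rmult_lt_0_compat; [apply cond_pos|auto]|lra]).
  exists (mkposreal e He). intros y Hy. apply HP.
  unfold ball in *; simpl in *. unfold AbsRing_ball, abs, minus, plus, opp in *; simpl in *.
  replace (y + - x0) with (y - x0) in Hy by ring. replace (f y + - f x0) with (f y - f x0) by ring.
  pose proof (Rmin_l d (eps * d / (2 * M + 1))). pose proof (Rmin_r d (eps * d / (2 * M + 1))).
  fold e in H1, H2.
  eapply Rle_lt_trans. apply (conv1_modulus f a b M x0 d); auto; lra.
  apply Rle_lt_trans with (2 * M * (eps * d / (2 * M + 1)) / d).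
  - unfold Rdiv. apply Rmult_le_compat_r. left; apply Rinv_0_lt_compat; auto.
    apply Rmult_le_compat_l; lra.
  - replace (2 * M * (eps * d / (2 * M + 1)) / d) with (eps * (2 * M / (2 * M + 1))) by (field; lra).
    pose proof (cond_pos eps).
    assert (2 * M / (2 * M + 1) < 1).
    { apply Rmult_lt_reg_r with (2 * M + 1); [lra|]. unfold Rdiv; rewrite Rmult_assoc, Rinv_l; lra. }
    nra.
Qed.

Lemma conv1_ex f a b : a <= b -> conv1 f a b -> ex_RInt f a b.
Proof.
  intros Hab Hc. destruct (conv1_bdd f a b Hab Hc) as [M HM].
  apply bdd_cont_ex with M; auto. intros. apply conv1_cont with a b; auto.
Qed.

Lemma conv1_mul_ex f p a b P : a <= b -> conv1 f a b -> (forall x, a <= x <= b -> Rabs (p x) <= P) ->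
  (forall x, continuity_pt p x) -> ex_RInt (fun x => p x * f x) a b.
Proof.
  intros Hab Hc HP Hp. destruct (conv1_bdd f a b Hab Hc) as [M HM].
  apply bdd_cont_ex with (P * M); auto.
  - intros x Hx. rewrite Rabs_mult. apply Rmult_le_compat; auto; apply Rabs_pos.
  - intros. apply continuity_pt_mult; auto. apply conv1_cont with a b; auto.
Qed.

Definition sumL (l : list R) : R := fold_right Rplus 0 l.

Lemma sumL_app u w : sumL (u ++ w) = sumL u + sumL w.
Proof. induction u; simpl; [ring|]. rewrite IHu. ring. Qed.

Lemma sumL_cons t u : sumL (t :: u) = t + sumL u.
Proof. reflexivity. Qed.

Lemma si_ext_len k : forall h1 h2 s, (forall v, length v = k -> h1 v = h2 v) ->
  simplex_int k h1 s = simplex_int k h2 s.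
Proof.
  induction k; intros h1 h2 s H; simpl.
  - apply H; reflexivity.
  - apply DR_ext_all; intro t. apply IHk. intros v Hv. apply H. simpl; auto.
Qed.

Lemma si_ext_s k h s1 s2 : s1 = s2 -> simplex_int k h s1 = simplex_int k h s2.
Proof. intros ->; reflexivity. Qed.

Lemma si_scal k : forall h c s, simplex_int k (fun v => c * h v) s = c * simplex_int k h s.
Proof.
  induction k; intros h c s; simpl; [reflexivity|].
  rewrite <- DR_scal. apply DR_ext_all; intro t. apply IHk.
Qed.

Lemma si_app a : forall b h s, simplex_int (a + b) h s =
  simplex_int a (fun u => simplex_int b (fun w => h (u ++ w)) (s - sumL u)) s.
Proof.
  induction a; intros b h s.
  - simpl. apply si_ext_s. ring.
  - change (simplex_int (S (a + b)) h s = simplex_int (S a) (fun u => simplex_int b (fun w => h (u ++ w)) (s - sumL u)) s).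
    simpl. apply DR_ext_all; intro t. rewrite IHa. apply si_ext_len; intros v _.
    apply si_ext_s. unfold sumL; simpl; ring.
Qed.

Lemma si_scale k : forall h c r, simplex_int k h (c * r) =
  c ^ k * simplex_int k (fun w => h (map (Rmult c) w)) r.
Proof.
  induction k; intros h c r; simpl; [ring|].
  destruct (Req_dec c 0) as [->|Hc].
  - rewrite Rmult_0_l, DR_point. ring.
  - rewrite DR_scale by auto. rewrite Rmult_assoc. f_equal.
    rewrite <- DR_scal. apply DR_ext_all; intro y.
    replace (c * r - c * y) with (c * (r - y)) by ring. rewrite IHk. reflexivity.
Qed.

Lemma DR_pow_refl n s : Defs.RInt (fun t => (s - t) ^ n) 0 s = s ^ (S n) / INR (S n).
Proof.
  rewrite DR_refl. rewrite (DR_ext_all _ (fun t => t ^ n)) by (intros; f_equal; ring).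
  rewrite DR_ex. 2: { eexists; apply is_RInt_pow. }
  rewrite (is_RInt_unique _ _ _ _ (is_RInt_pow 0 s n)).
  rewrite pow_i by lia. unfold Rdiv. ring.
Qed.

Lemma INR_fact_pos n : 0 < INR (fact n).
Proof. apply lt_0_INR. apply lt_O_fact. Qed.

Lemma si_poly k : forall p s, simplex_int k (fun u => (s - sumL u) ^ p) s =
  s ^ (k + p) * INR (fact p) / INR (fact (k + p)).
Proof.
  induction k; intros p s.
  - simpl. rewrite Rminus_0_r. field. apply Rgt_not_eq, INR_fact_pos.
  - simpl. rewrite (DR_ext_all _ (fun t => INR (fact p) / INR (fact (k + p)) * (s - t) ^ (k + p))).
    2: { intros t. transitivity (simplex_int k (fun u => ((s - t) - sumL u) ^ p) (s - t)).
         apply si_ext_len; intros v _; f_equal; unfold sumL; simpl; ring.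
         rewrite IHk. field. apply Rgt_not_eq, INR_fact_pos. }
    rewrite DR_scal. rewrite DR_pow_refl.
    rewrite plus_INR, mult_INR, S_INR. simpl (s ^ S (k + p)).
    pose proof (INR_fact_pos (k + p)). pose proof (pos_INR (k + p)).
    field. repeat split; nra.
Qed.

Lemma si_refl k : forall h s, simplex_int (k + 1) h s =
  simplex_int (k + 1) (fun v => h (removelast v ++ [s - sumL v])) s.
Proof.
  intros h s. rewrite !si_app. apply si_ext_len; intros u _. simpl.
  rewrite DR_refl. apply DR_ext_all; intro t.
  rewrite removelast_last.
  replace (s - sumL (u ++ [t])) with (s - sumL u - t) by (rewrite sumL_app; unfold sumL; simpl; ring).
  reflexivity.
Qed.

Definition inT (k : nat) (s : R) (v : list R) : Prop :=
  length v = k /\ (forall x, In x v -> 0 <= x) /\ sumL v <= s.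

Fixpoint lc (l : R) (u v : list R) : list R :=
  match u, v with
  | x :: u', y :: v' => (l * x + (1 - l) * y) :: lc l u' v'
  | _, _ => []
  end.

Definition convT (k : nat) (s : R) (h : list R -> R) : Prop :=
  forall u v l, inT k s u -> inT k s v -> 0 <= l <= 1 ->
    h (lc l u v) <= l * h u + (1 - l) * h v.

Fixpoint GI (k : nat) (h : list R -> R) (s : R) : Prop :=
  match k with
  | O => True
  | S k' => ex_RInt (fun t => simplex_int k' (fun v => h (t :: v)) (s - t)) 0 s /\
            forall t, 0 <= t <= s -> GI k' (fun v => h (t :: v)) (s - t)
  end.

Lemma inT_cons k s t v : inT (S k) s (t :: v) <-> 0 <= t /\ inT k (s - t) v.
Proof.
  unfold inT; simpl. split.
  - intros [Hl [Hp Hs]]. split; [apply Hp; auto|]. split; [lia|]. split.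
    + intros; apply Hp; auto.
    + unfold sumL in *; simpl in *; lra.
  - intros [Ht [Hl [Hp Hs]]]. split; [lia|]. split.
    + intros x [<-|Hx]; auto.
    + unfold sumL in *; simpl in *; lra.
Qed.

Lemma inT_nil s : 0 <= s -> inT 0 s [].
Proof. intros; unfold inT; simpl. split; auto. split; auto. intros x []. Qed.

Lemma inT_len k s v : inT k s v -> length v = k.
Proof. intros [H _]; auto. Qed.

Lemma inT_mono k s1 s2 w : s1 <= s2 -> inT k s1 w -> inT k s2 w.
Proof. intros Hs [A [B C]]. split; auto. split; auto. lra. Qed.

Lemma inT_s_nonneg k s v : inT k s v -> 0 <= s.
Proof.
  intros [_ [Hp Hs]]. assert (0 <= sumL v).
  { clear Hs. induction v; unfold sumL; simpl. lra.
    assert (0 <= a) by (apply Hp; simpl; auto). fold (sumL v).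
    assert (0 <= sumL v) by (apply IHv; intros; apply Hp; simpl; auto). lra. }
  lra.
Qed.

Lemma lc_cons l x u y v : lc l (x :: u) (y :: v) = (l * x + (1 - l) * y) :: lc l u v.
Proof. reflexivity. Qed.

Lemma lc_len u : forall v l, length u = length v -> length (lc l u v) = length u.
Proof.
  induction u; intros v l H; destruct v; simpl in *; try lia. rewrite IHu; auto.
Qed.

Lemma lc_sum u : forall v l, length u = length v -> sumL (lc l u v) = l * sumL u + (1 - l) * sumL v.
Proof.
  induction u; intros v l H; destruct v; simpl in H; try lia.
  - simpl. unfold sumL; simpl; ring.
  - rewrite lc_cons, !sumL_cons. rewrite IHu by lia. ring.
Qed.

Lemma lc_nonneg u : forall v l, 0 <= l <= 1 -> (forall x, In x u -> 0 <= x) -> (forall x, In x v -> 0 <= x) ->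
  forall x, In x (lc l u v) -> 0 <= x.
Proof.
  induction u; intros v l Hl Hu Hv x Hx; destruct v; simpl in *; try tauto.
  destruct Hx as [<-|Hx].
  - assert (0 <= a) by (apply Hu; left; reflexivity). assert (0 <= r) by (apply Hv; left; reflexivity). nra.
  - eapply (IHu v l Hl); eauto.
Qed.

Lemma inT_lc k s u v l : inT k s u -> inT k s v -> 0 <= l <= 1 -> inT k s (lc l u v).
Proof.
  intros [Lu [Pu Su]] [Lv [Pv Sv]] Hl. split; [|split].
  - rewrite lc_len; lia.
  - apply lc_nonneg; auto.
  - rewrite lc_sum by lia. nra.
Qed.

Lemma GI_lin k : forall h1 h2 s a b, 0 <= s -> GI k h1 s -> GI k h2 s ->
  GI k (fun v => a * h1 v + b * h2 v) s /\
  simplex_int k (fun v => a * h1 v + b * h2 v) s = a * simplex_int k h1 s + b * simplex_int k h2 s.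
Proof.
  induction k; intros h1 h2 s a b Hs G1 G2.
  - simpl; split; auto.
  - destruct G1 as [E1 G1]; destruct G2 as [E2 G2].
    assert (Hin : forall t, 0 <= t <= s ->
      GI k (fun v => a * h1 (t :: v) + b * h2 (t :: v)) (s - t) /\
      simplex_int k (fun v => a * h1 (t :: v) + b * h2 (t :: v)) (s - t) =
      a * simplex_int k (fun v => h1 (t :: v)) (s - t) + b * simplex_int k (fun v => h2 (t :: v)) (s - t)).
    { intros t Ht. apply IHk; auto; lra. }
    assert (Heq : forall t, Rmin 0 s < t < Rmax 0 s ->
      a * simplex_int k (fun v => h1 (t :: v)) (s - t) + b * simplex_int k (fun v => h2 (t :: v)) (s - t) =
      simplex_int k (fun v => a * h1 (t :: v) + b * h2 (t :: v)) (s - t)).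
    { intros t Ht. rewrite Rmin_left, Rmax_right in Ht by lra. symmetry; apply Hin; lra. }
    split; [split|].
    + eapply exR_ext. apply Heq. apply exR_plus; apply exR_scal; auto.
    + intros t Ht; apply Hin; auto.
    + simpl. rewrite <- (DR_ext _ _ _ _ Heq). rewrite DR_plus by (apply exR_scal; auto).
      rewrite !DR_scal. reflexivity.
Qed.

Lemma GI_mono k : forall h1 h2 s, 0 <= s -> GI k h1 s -> GI k h2 s ->
  (forall v, inT k s v -> h1 v <= h2 v) -> simplex_int k h1 s <= simplex_int k h2 s.
Proof.
  induction k; intros h1 h2 s Hs G1 G2 H.
  - simpl. apply H, inT_nil; auto.
  - destruct G1 as [E1 G1]; destruct G2 as [E2 G2]. simpl.
    apply DR_le; auto. intros t Ht. apply IHk; try apply G1; try apply G2; try lra.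
    intros v Hv. apply H. apply inT_cons. split; auto; lra.
Qed.

Lemma GI_ext k : forall h1 h2 s, 0 <= s -> (forall v, inT k s v -> h1 v = h2 v) -> GI k h1 s ->
  GI k h2 s /\ simplex_int k h1 s = simplex_int k h2 s.
Proof.
  induction k; intros h1 h2 s Hs H G1.
  - simpl; split; auto. apply H, inT_nil; auto.
  - destruct G1 as [E1 G1].
    assert (Hin : forall t, 0 <= t <= s -> GI k (fun v => h2 (t :: v)) (s - t) /\
      simplex_int k (fun v => h1 (t :: v)) (s - t) = simplex_int k (fun v => h2 (t :: v)) (s - t)).
    { intros t Ht. apply IHk; auto; try lra. intros v Hv. apply H, inT_cons; split; auto; lra. }
    assert (Heq : forall t, Rmin 0 s < t < Rmax 0 s ->
      simplex_int k (fun v => h1 (t :: v)) (s - t) = simplex_int k (fun v => h2 (t :: v)) (s - t)).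
    { intros t Ht. rewrite Rmin_left, Rmax_right in Ht by lra. apply Hin; lra. }
    split; [split|].
    + apply (exR_ext (fun t => simplex_int k (fun v => h1 (t :: v)) (s - t))); auto.
    + intros t Ht; apply Hin; auto.
    + simpl. apply DR_ext; auto.
Qed.

Lemma si_conv k r H1 H2 H3 l : 0 <= r -> GI k H1 r -> GI k H2 r -> GI k H3 r -> 0 <= l <= 1 ->
  (forall w, inT k r w -> H3 w <= l * H1 w + (1 - l) * H2 w) ->
  simplex_int k H3 r <= l * simplex_int k H1 r + (1 - l) * simplex_int k H2 r.
Proof.
  intros Hr G1 G2 G3 Hl H. destruct (GI_lin k H1 H2 r l (1 - l) Hr G1 G2) as [G E].
  rewrite <- E. apply GI_mono; auto.
Qed.

Lemma convT_comp k s h j r (A : list R -> list R) : convT k s h ->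
  (forall u, inT j r u -> inT k s (A u)) ->
  (forall u v l, inT j r u -> inT j r v -> 0 <= l <= 1 -> A (lc l u v) = lc l (A u) (A v)) ->
  convT j r (fun u => h (A u)).
Proof. intros Hc HA HL u v l Hu Hv Hl. rewrite HL; auto. Qed.

Lemma convT_slice k s h t : convT (S k) s h -> 0 <= t -> convT k (s - t) (fun v => h (t :: v)).
Proof.
  intros Hc Ht. apply (convT_comp (S k) s h k (s - t) (fun v => t :: v)); auto.
  - intros u Hu. apply inT_cons; auto.
  - intros u v l _ _ _. rewrite lc_cons. f_equal. ring.
Qed.

Definition smap (c : R) (w : list R) : list R := map (Rmult c) w.

Lemma sumL_smap c w : sumL (smap c w) = c * sumL w.
Proof.
  induction w as [|a w IH]. - unfold smap, sumL; simpl; ring.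
  - change (smap c (a :: w)) with (c * a :: smap c w). rewrite !sumL_cons, IH. ring.
Qed.

Lemma inT_smap k c r w : 0 <= c -> inT k r w -> inT k (c * r) (smap c w).
Proof.
  intros Hc [L [P S]]. split; [|split].
  - unfold smap; rewrite length_map; auto.
  - intros x Hx. unfold smap in Hx. apply in_map_iff in Hx. destruct Hx as [y [<- Hy]].
    apply Rmult_le_pos; auto.
  - rewrite sumL_smap. apply Rmult_le_compat_l; auto.
Qed.

Lemma lc_smap_same l c u : forall v, length u = length v -> lc l (smap c u) (smap c v) = smap c (lc l u v).
Proof.
  induction u; intros v H; destruct v; simpl in H; try lia; unfold smap in *; simpl; auto.
  f_equal. ring. apply IHu; lia.
Qed.

Lemma lc_smap_diff l a b w : lc l (smap a w) (smap b w) = smap (l * a + (1 - l) * b) w.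
Proof.
  induction w; unfold smap in *; simpl; auto. f_equal. ring. auto.
Qed.

Lemma cont_pow_lin s k x : continuity_pt (fun t => (s - t) ^ k) x.
Proof.
  induction k; simpl.
  - apply continuity_pt_const. intros u v; auto.
  - apply continuity_pt_mult; auto. apply continuity_pt_minus. apply continuity_pt_const. intros u v; auto.
    apply derivable_continuous_pt, derivable_pt_id.
Qed.

Lemma CT k : forall s h, 0 <= s -> convT k s h -> GI k h s.
Proof.
  induction k; intros s h Hs Hc; [simpl; auto|].
  set (H := fun t w => h (t :: smap (s - t) w)).
  assert (HconvH : forall t, 0 <= t <= s -> convT k 1 (H t)).
  { intros t Ht. unfold H. apply (convT_comp (S k) s h k 1 (fun w => t :: smap (s - t) w)); auto.
    - intros u Hu. apply inT_cons. split; [lra|]. replace (s - t) with ((s - t) * 1) at 1 by ring.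
      apply inT_smap; auto; lra.
    - intros u v l Hu Hv Hl. rewrite lc_cons. f_equal. ring.
      symmetry; apply lc_smap_same. rewrite (inT_len _ _ _ Hu), (inT_len _ _ _ Hv); auto. }
  assert (HGI : forall t, 0 <= t <= s -> GI k (H t) 1) by (intros; apply IHk; auto; lra).
  set (N := fun t => simplex_int k (H t) 1).
  assert (HN : conv1 N 0 s).
  { intros t1 t2 l Ht1 Ht2 Hl. unfold N.
    assert (Ht : 0 <= l * t1 + (1 - l) * t2 <= s) by nra.
    apply si_conv; auto; try lra.
    intros w Hw. unfold H.
    replace (smap (s - (l * t1 + (1 - l) * t2)) w) with (smap (l * (s - t1) + (1 - l) * (s - t2)) w)
      by (f_equal; ring).
    rewrite <- lc_smap_diff. rewrite <- lc_cons.
    apply Hc; try lra.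
    - apply inT_cons; split; [lra|]. replace (s - t1) with ((s - t1) * 1) at 1 by ring. apply inT_smap; auto; lra.
    - apply inT_cons; split; [lra|]. replace (s - t2) with ((s - t2) * 1) at 1 by ring. apply inT_smap; auto; lra. }
  split.
  - apply (exR_ext (fun t => (s - t) ^ k * N t)).
    + intros t _. unfold N, H. symmetry.
      rewrite (si_ext_s k _ (s - t) ((s - t) * 1)) by ring.
      rewrite si_scale. reflexivity.
    + apply conv1_mul_ex with (s ^ k); auto.
      * intros x Hx. rewrite Rabs_pos_eq by (apply pow_le; lra). apply pow_incr; lra.
      * intros; apply cont_pow_lin.
  - intros t Ht. apply IHk; [lra|]. apply convT_slice; auto; lra.
Qed.

Definition inTri (s t u : R) : Prop := 0 <= t /\ 0 <= u /\ t + u <= s.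

Definition conv2 (N : R -> R -> R) (s : R) : Prop :=
  forall t1 u1 t2 u2 l, inTri s t1 u1 -> inTri s t2 u2 -> 0 <= l <= 1 ->
    N (l * t1 + (1 - l) * t2) (l * u1 + (1 - l) * u2) <= l * N t1 u1 + (1 - l) * N t2 u2.

Lemma conv2_bdd N s : 0 <= s -> conv2 N s -> exists M, forall t u, inTri s t u -> Rabs (N t u) <= M.
Proof.
  intros Hs Hc.
  set (U := Rmax (N 0 0) (Rmax (N s 0) (N 0 s))).
  assert (U0 : N 0 0 <= U) by apply Rmax_l.
  assert (U1 : N s 0 <= U) by (eapply Rle_trans; [apply Rmax_l|apply Rmax_r]).
  assert (U2 : N 0 s <= U) by (eapply Rle_trans; [apply Rmax_r|apply Rmax_r]).
  assert (Hup : forall t u, inTri s t u -> N t u <= U).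
  { intros t u [Ht [Hu Htu]].
    destruct (Req_dec (t + u) 0) as [E|E].
    { replace t with 0 by lra. replace u with 0 by lra. auto. }
    assert (Hs' : 0 < s) by lra.
    set (a := t / (t + u)).
    assert (Ha : 0 <= a <= 1).
    { unfold a; split. apply Rdiv_le_0_compat; lra.
      apply Rmult_le_reg_r with (t + u); [lra|]. unfold Rdiv; rewrite Rmult_assoc, Rinv_l; lra. }
    assert (He : N (a * s + (1 - a) * 0) (a * 0 + (1 - a) * s) <= U).
    { eapply Rle_trans. apply Hc; unfold inTri; try lra. nra. }
    set (b := (t + u) / s).
    assert (Hb : 0 <= b <= 1).
    { unfold b; split. apply Rdiv_le_0_compat; lra.
      apply Rmult_le_reg_r with s; [lra|]. unfold Rdiv; rewrite Rmult_assoc, Rinv_l; lra. }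
    assert (Et : t = b * (a * s + (1 - a) * 0) + (1 - b) * 0) by (unfold a, b; field; lra).
    assert (Eu : u = b * (a * 0 + (1 - a) * s) + (1 - b) * 0) by (unfold a, b; field; lra).
    rewrite Et, Eu. eapply Rle_trans. apply Hc; unfold inTri; try lra; nra. nra. }
  set (m := s / 3).
  exists (Rmax (Rabs U) (Rabs (3 * N m m - 2 * U))).
  intros t u Htu. apply Rabs_le. destruct Htu as [Ht [Hu Htu]]. split.
  - assert (N m m <= / 3 * N t u + (1 - / 3) * N ((s - t) / 2) ((s - u) / 2)).
    { replace m with (/ 3 * t + (1 - / 3) * ((s - t) / 2)) at 1 by (unfold m; field).
      replace m with (/ 3 * u + (1 - / 3) * ((s - u) / 2)) at 1 by (unfold m; field).
      apply Hc; unfold inTri; lra. }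
    pose proof (Hup ((s - t) / 2) ((s - u) / 2) ltac:(unfold inTri; lra)).
    pose proof (Rmax_r (Rabs U) (Rabs (3 * N m m - 2 * U))).
    pose proof (Rle_abs (- (3 * N m m - 2 * U))). rewrite Rabs_Ropp in H2. lra.
  - pose proof (Hup t u ltac:(unfold inTri; lra)). pose proof (Rmax_l (Rabs U) (Rabs (3 * N m m - 2 * U))).
    pose proof (RRle_abs U). lra.
Qed.

Lemma conv2_modulus N s M t0 u0 d : conv2 N s -> (forall t u, inTri s t u -> Rabs (N t u) <= M) ->
  0 < d -> 0 <= t0 - d -> 0 <= u0 - d -> t0 + u0 + 2 * d <= s ->
  forall t u, Rabs (t - t0) <= d -> Rabs (u - u0) <= d ->
  Rabs (N t u - N t0 u0) <= 2 * M * Rmax (Rabs (t - t0)) (Rabs (u - u0)) / d.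
Proof.
  intros Hc HM Hd H1 H2 H3 t u Ht Hu.
  set (r := Rmax (Rabs (t - t0)) (Rabs (u - u0))).
  assert (Hr0 : 0 <= r) by (unfold r; eapply Rle_trans; [apply Rabs_pos|apply Rmax_l]).
  assert (Hrt : Rabs (t - t0) <= r) by apply Rmax_l.
  assert (Hru : Rabs (u - u0) <= r) by apply Rmax_r.
  assert (Hrd : r <= d) by (unfold r; apply Rmax_lub; auto).
  destruct (Req_dec r 0) as [E|E].
  { assert (t = t0). { pose proof (Rabs_pos (t - t0)). assert (Rabs (t - t0) = 0) by lra.
      apply Rabs_eq_0 in H0. lra. }
    assert (u = u0). { pose proof (Rabs_pos (u - u0)). assert (Rabs (u - u0) = 0) by lra.
      apply Rabs_eq_0 in H4. lra. }
    subst. fold r. rewrite E. rewrite Rminus_diag, Rabs_R0. replace (2 * M * 0 / d) with 0 by (field; lra). lra. }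
  assert (Hr : 0 < r) by lra.
  set (qt := t0 + d / r * (t - t0)). set (qu := u0 + d / r * (u - u0)).
  set (pt := t0 - d / r * (t - t0)). set (pu := u0 - d / r * (u - u0)).
  assert (Bq : forall z z0, Rabs (z - z0) <= r -> Rabs (d / r * (z - z0)) <= d).
  { intros z z0 Hz. rewrite Rabs_mult, Rabs_pos_eq by (apply Rdiv_le_0_compat; lra).
    apply Rle_trans with (d / r * r). apply Rmult_le_compat_l; auto. apply Rdiv_le_0_compat; lra.
    right; field; lra. }
  pose proof (absb _ _ (Bq t t0 Hrt)). pose proof (absb _ _ (Bq u u0 Hru)).
  pose proof (absb _ _ Ht). pose proof (absb _ _ Hu).
  assert (Tq : inTri s qt qu) by (unfold inTri, qt, qu; lra).
  assert (Tp : inTri s pt pu) by (unfold inTri, pt, pu; lra).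
  assert (T0 : inTri s t0 u0) by (unfold inTri; lra).
  assert (T1 : inTri s t u) by (unfold inTri; lra).
  assert (A1 : N t u <= r / d * N qt qu + (1 - r / d) * N t0 u0).
  { replace t with (r / d * qt + (1 - r / d) * t0) at 1 by (unfold qt; field; lra).
    replace u with (r / d * qu + (1 - r / d) * u0) at 1 by (unfold qu; field; lra).
    apply Hc; auto. split. apply Rdiv_le_0_compat; lra.
    apply Rmult_le_reg_r with d; auto. unfold Rdiv; rewrite Rmult_assoc, Rinv_l; lra. }
  assert (A2 : N t0 u0 <= d / (d + r) * N t u + (1 - d / (d + r)) * N pt pu).
  { replace t0 with (d / (d + r) * t + (1 - d / (d + r)) * pt) at 1 by (unfold pt; field; lra).
    replace u0 with (d / (d + r) * u + (1 - d / (d + r)) * pu) at 1 by (unfold pu; field; lra).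
    apply Hc; auto. split. apply Rdiv_le_0_compat; lra.
    apply Rmult_le_reg_r with (d + r); [lra|]. unfold Rdiv; rewrite Rmult_assoc, Rinv_l; lra. }
  pose proof (HM _ _ Tq) as Q1. pose proof (HM _ _ Tp) as Q2. pose proof (HM _ _ T0) as Q3.
  pose proof (HM _ _ T1) as Q4.
  apply Rabs_le_between in Q1. apply Rabs_le_between in Q2. apply Rabs_le_between in Q3.
  apply Rabs_le_between in Q4. fold r.
  apply Rabs_le. split.
  - assert (B : (d + r) * N t0 u0 <= d * N t u + r * N pt pu).
    { replace (d * N t u + r * N pt pu) with ((d + r) * (d / (d + r) * N t u + (1 - d / (d + r)) * N pt pu)) by (field; lra).
      apply Rmult_le_compat_l; lra. }
    assert (r * (N pt pu - N t0 u0) <= r * (2 * M)) by (apply Rmult_le_compat_l; lra).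
    apply Rmult_le_reg_r with d; auto.
    replace (- (2 * M * r / d) * d) with (- (2 * M * r)) by (field; lra). nra.
  - assert (B : d * N t u <= r * N qt qu + (d - r) * N t0 u0).
    { replace (r * N qt qu + (d - r) * N t0 u0) with (d * (r / d * N qt qu + (1 - r / d) * N t0 u0)) by (field; lra).
      apply Rmult_le_compat_l; lra. }
    assert (r * (N qt qu - N t0 u0) <= r * (2 * M)) by (apply Rmult_le_compat_l; lra).
    apply Rmult_le_reg_r with d; auto.
    replace (2 * M * r / d * d) with (2 * M * r) by (field; lra). nra.
Qed.

Lemma cont_pt_intro (f : R -> R) x0 :
  (forall eps, 0 < eps -> exists d, 0 < d /\ forall x, Rabs (x - x0) < d -> Rabs (f x - f x0) < eps) ->
  continuity_pt f x0.
Proof.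
  intros H. unfold continuity_pt, continue_in, limit1_in, limit_in. intros eps He.
  destruct (H eps He) as [d [Hd H']]. exists d; split; auto.
  intros x [_ Hx]. simpl in *. unfold R_dist in *. apply H'; auto.
Qed.

Lemma cont2_elim (g : R -> R -> R) x y eps : continuity_2d_pt g x y -> 0 < eps ->
  exists d, 0 < d /\ forall u v, Rabs (u - x) < d -> Rabs (v - y) < d -> Rabs (g u v - g x y) < eps.
Proof.
  intros H He. destruct (H (mkposreal eps He)) as [d Hd]. exists d; split; [apply cond_pos|].
  intros u v Hu Hv. apply Hd; auto.
Qed.

Lemma cont2_intro (g : R -> R -> R) x y :
  (forall eps, 0 < eps -> exists d, 0 < d /\ forall u v, Rabs (u - x) < d -> Rabs (v - y) < d ->
     Rabs (g u v - g x y) < eps) -> continuity_2d_pt g x y.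
Proof.
  intros H eps. destruct (H eps (cond_pos eps)) as [d [Hd H']]. exists (mkposreal d Hd). auto.
Qed.

Lemma cont2_slice2 (g : R -> R -> R) x y : continuity_2d_pt g x y -> continuity_pt (fun v => g x v) y.
Proof.
  intros H. apply cont_pt_intro. intros eps He. destruct (cont2_elim g x y eps H He) as [d [Hd H']].
  exists d; split; auto. intros v Hv. apply H'; auto. rewrite Rminus_diag, Rabs_R0; auto.
Qed.

Lemma cont2_slice1 (g : R -> R -> R) x y : continuity_2d_pt g x y -> continuity_pt (fun u => g u y) x.
Proof.
  intros H. apply cont_pt_intro. intros eps He. destruct (cont2_elim g x y eps H He) as [d [Hd H']].
  exists d; split; auto. intros v Hv. apply H'; auto. rewrite Rminus_diag, Rabs_R0; auto.
Qed.

Lemma cont2_swap (g : R -> R -> R) x y : continuity_2d_pt g x y -> continuity_2d_pt (fun u v => g v u) y x.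
Proof.
  intros H. apply cont2_intro. intros eps He. destruct (cont2_elim g x y eps H He) as [d [Hd H']].
  exists d; split; auto.
Qed.

Lemma PC_aux (g : R -> R -> R) a b x0 : a <= b -> (forall x y, continuity_2d_pt g x y) ->
  continuity_pt (fun x => Defs.RInt (g x) a b) x0.
Proof.
  intros Hab Hg. apply cont_pt_intro. intros eps He.
  set (e := eps / (b - a + 1)).
  assert (He' : 0 < e) by (unfold e; apply Rdiv_lt_0_compat; lra).
  destruct (uniform_continuity_2d g (x0 - 1) (x0 + 1) a b ltac:(intros; auto) (mkposreal e He')) as [d Hd].
  exists (Rmin d 1). split. apply Rmin_pos; [apply cond_pos|lra].
  intros x Hx. pose proof (Rmin_l d 1). pose proof (Rmin_r d 1).
  assert (Hex : forall z, ex_RInt (g z) a b).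
  { intros z. apply exR_continuous. intros y _. apply continuity_pt_filterlim, cont2_slice2; auto. }
  rewrite <- DR_minus by auto.
  eapply Rle_lt_trans. apply (DR_abs_le _ (fun _ => e)); auto. apply exR_minus; auto. apply exR_const.
  - intros y Hy. left. apply Hd; try lra.
    + apply Rlt_le, absb in Hx. lra.
    + rewrite Rminus_diag, Rabs_R0. apply cond_pos.
  - rewrite DR_const. unfold e. apply Rmult_lt_reg_r with (b - a + 1); [lra|].
    replace (eps / (b - a + 1) * (b - a) * (b - a + 1)) with (eps * (b - a)) by (field; lra). nra.
Qed.

Lemma PC (g : R -> R -> R) a b x0 : (forall x y, continuity_2d_pt g x y) ->
  continuity_pt (fun x => Defs.RInt (g x) a b) x0.
Proof.
  intros Hg. destruct (Rle_dec a b). apply PC_aux; auto.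
  apply (continuity_pt_ext (fun x => - Defs.RInt (g x) b a)).
  intros x. rewrite <- DR_swap. reflexivity.
  apply continuity_pt_opp. apply PC_aux; auto; lra.
Qed.

Lemma cont_ex_all (f : R -> R) a b : (forall x, continuity_pt f x) -> ex_RInt f a b.
Proof. intros H. apply exR_continuous. intros; apply continuity_pt_filterlim; auto. Qed.

Lemma RF (g : R -> R -> R) a b c d : a <= b -> (forall x y, continuity_2d_pt g x y) ->
  Defs.RInt (fun x => Defs.RInt (g x) c d) a b = Defs.RInt (fun y => Defs.RInt (fun x => g x y) a b) c d.
Proof.
  intros Hab Hg.
  assert (Hs : forall x y, continuity_2d_pt (fun u v => g v u) x y) by (intros; apply cont2_swap; auto).
  assert (exg : forall x p q, ex_RInt (g x) p q).
  { intros. apply cont_ex_all. intros; apply cont2_slice2; auto. }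
  assert (exg' : forall y p q, ex_RInt (fun x => g x y) p q).
  { intros. apply cont_ex_all. intros; apply cont2_slice1; auto. }
  set (phi := fun x => Defs.RInt (g x) c d).
  assert (phic : forall x, continuity_pt phi x) by (intros; apply PC; auto).
  set (f := fun z y => Defs.RInt (fun x => g x y) a z).
  assert (fc : forall z y, continuity_pt (fun y => f z y) y).
  { intros. unfold f. apply (PC (fun u v => g v u)); auto. }
  assert (fd : forall z y, is_derive (fun u => f u y) z (g z y)).
  { intros z y. unfold f.
    apply (is_derive_ext (fun u => RInt (fun x => g x y) a u)).
    { intros t; symmetry; apply DR_ex; auto. }
    apply (is_derive_RInt (fun x => g x y) (fun u => RInt (fun x => g x y) a u) a z).
    - exists (mkposreal 1 Rlt_0_1). intros b0 _. apply RR_correct; auto.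
    - apply continuity_pt_filterlim, cont2_slice1; auto. }
  set (Phi := fun z => Defs.RInt phi a z).
  set (Psi := fun z => Defs.RInt (fun y => f z y) c d).
  assert (DPhi : forall z, is_derive Phi z (phi z)).
  { intros z. apply (is_derive_ext (fun u => RInt phi a u)).
    { intros t; symmetry; apply DR_ex; apply cont_ex_all; auto. }
    apply (is_derive_RInt phi (fun u => RInt phi a u) a z).
    - exists (mkposreal 1 Rlt_0_1). intros b0 _. apply RR_correct; apply cont_ex_all; auto.
    - apply continuity_pt_filterlim; auto. }
  assert (DPsi : forall z, is_derive Psi z (phi z)).
  { intros z. apply (is_derive_ext (fun u => RInt (fun y => f u y) c d)).
    { intros t; symmetry; apply DR_ex; apply cont_ex_all; auto. }
    replace (phi z) with (RInt (fun t => Derive (fun u => f u t) z) c d).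
    2: { unfold phi. rewrite DR_ex by auto. apply RInt_ext. intros x _.
         apply is_derive_unique; auto. }
    apply (is_derive_RInt_param f c d z).
    - exists (mkposreal 1 Rlt_0_1). intros x0 _ t _. eexists; apply fd.
    - intros t _. apply (continuity_2d_pt_ext g). intros x0 y0. symmetry. apply is_derive_unique, fd. auto.
    - exists (mkposreal 1 Rlt_0_1). intros y _. apply cont_ex_all; auto. }
  assert (Pa : Phi a = 0) by (unfold Phi; apply DR_point).
  assert (Sa : Psi a = 0).
  { unfold Psi, f. rewrite (DR_ext_all _ (fun _ => 0)) by (intros; apply DR_point).
    rewrite DR_const; ring. }
  change (Phi b = Psi b).
  destruct (Req_dec a b) as [<-|Hne].
  - lra.
  - assert (E := eq_is_derive (fun z => Phi z - Psi z) a b).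
    assert (Ea : Phi a - Psi a = Phi b - Psi b).
    { apply E; [|lra]. intros t _.
      assert (D := is_derive_minus Phi Psi t (phi t) (phi t) (DPhi t) (DPsi t)).
      rewrite minus_eq_zero in D. exact D. }
    lra.
Qed.

Definition cc (d x : R) : R := cl ((x - d) / d).

Lemma cc_range d x : 0 <= cc d x <= 1.
Proof. apply cl_range. Qed.
Lemma cc_0 d x : 0 < d -> x <= d -> cc d x = 0.
Proof.
  intros Hd Hx. apply cl_0. apply Rmult_le_reg_r with d; auto.
  replace ((x - d) / d * d) with (x - d) by (field; lra). lra.
Qed.
Lemma cc_1 d x : 0 < d -> 2 * d <= x -> cc d x = 1.
Proof.
  intros Hd Hx. apply cl_1. apply Rmult_le_reg_r with d; auto.
  replace ((x - d) / d * d) with (x - d) by (field; lra). lra.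
Qed.
Lemma cc_cont d x : 0 < d -> continuity_pt (cc d) x.
Proof. intros Hd. unfold cc. apply cl_cont_comp. lra. Qed.
Lemma cc_lip d x y : 0 < d -> Rabs (cc d x - cc d y) <= Rabs (x - y) / d.
Proof.
  intros Hd. unfold cc. eapply Rle_trans. apply cl_lip.
  replace ((x - d) / d - (y - d) / d) with ((x - y) / d) by (field; lra).
  unfold Rdiv. rewrite Rabs_mult, (Rabs_pos_eq (/ d)) by (left; apply Rinv_0_lt_compat; auto). lra.
Qed.

Lemma CUT d L : 0 < d -> 0 <= L -> Defs.RInt (fun u => 1 - cc d u) 0 L <= 2 * d.
Proof.
  intros Hd HL.
  assert (Hex : forall p q, ex_RInt (fun u => 1 - cc d u) p q).
  { intros. apply cont_ex_all. intros. apply continuity_pt_minus. apply continuity_pt_const; intros u v; auto.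
    apply cc_cont; auto. }
  destruct (Rle_dec L (2 * d)).
  - eapply Rle_trans. apply (DR_le_const _ 0 L 1); auto. intros x _. pose proof (cc_range d x). lra. lra.
  - rewrite <- (DR_Chasles _ 0 (2 * d) L) by auto.
    rewrite (DR_ext (fun u => 1 - cc d u) (fun _ => 0) (2 * d) L).
    + rewrite DR_const. eapply Rle_trans. apply Rplus_le_compat_r. apply (DR_le_const _ 0 (2 * d) 1); auto. lra.
      intros x _. pose proof (cc_range d x). lra. lra.
    + intros x Hx. rewrite Rmin_left, Rmax_right in Hx by lra. rewrite cc_1; lra.
Qed.

Lemma prod3_lip a b c a' b' c' : 0 <= a <= 1 -> 0 <= b <= 1 -> 0 <= c <= 1 ->
  0 <= a' <= 1 -> 0 <= b' <= 1 -> 0 <= c' <= 1 ->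
  Rabs (a' * b' * c' - a * b * c) <= Rabs (a' - a) + Rabs (b' - b) + Rabs (c' - c).
Proof.
  intros. replace (a' * b' * c' - a * b * c) with ((a' - a) * (b' * c') + (b' - b) * (a * c') + (c' - c) * (a * b)) by ring.
  eapply Rle_trans. apply Rabs_triang. eapply Rle_trans. apply Rplus_le_compat_r. apply Rabs_triang.
  rewrite (Rabs_mult (a' - a) (b' * c')), (Rabs_mult (b' - b) (a * c')), (Rabs_mult (c' - c) (a * b)).
  rewrite (Rabs_pos_eq (b' * c')) by nra. rewrite (Rabs_pos_eq (a * c')) by nra.
  rewrite (Rabs_pos_eq (a * b)) by nra.
  pose proof (Rabs_pos (a' - a)). pose proof (Rabs_pos (b' - b)). pose proof (Rabs_pos (c' - c)).
  assert (b' * c' <= 1) by nra. assert (a * c' <= 1) by nra. assert (a * b <= 1) by nra.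
  assert (Rabs (a' - a) * (b' * c') <= Rabs (a' - a)) by nra.
  assert (Rabs (b' - b) * (a * c') <= Rabs (b' - b)) by nra.
  assert (Rabs (c' - c) * (a * b) <= Rabs (c' - c)) by nra. lra.
Qed.

Definition chi (s d t x : R) : R := cc d t * cc d (x - t) * cc d (s - x).

Lemma chi_range s d t x : 0 <= chi s d t x <= 1.
Proof.
  unfold chi. pose proof (cc_range d t). pose proof (cc_range d (x - t)). pose proof (cc_range d (s - x)).
  assert (0 <= cc d t * cc d (x - t) <= 1) by (split; nra). split; nra.
Qed.

Lemma chi_cont s d t x : 0 < d -> continuity_2d_pt (chi s d) t x.
Proof.
  intros Hd. apply cont2_intro. intros eps He. exists (eps * d / 4). split.
  { apply Rmult_lt_0_compat. apply Rmult_lt_0_compat; auto. lra. }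
  intros u v Hu Hv. unfold chi.
  eapply Rle_lt_trans. apply prod3_lip; apply cc_range.
  pose proof (cc_lip d u t Hd). pose proof (cc_lip d (v - u) (x - t) Hd). pose proof (cc_lip d (s - v) (s - x) Hd).
  replace (v - u - (x - t)) with ((v - x) - (u - t)) in H0 by ring.
  replace (s - v - (s - x)) with (- (v - x)) in H1 by ring. rewrite Rabs_Ropp in H1.
  pose proof (Rabs_triang (v - x) (- (u - t))). rewrite Rabs_Ropp in H2.
  assert (Rabs (v - x - (u - t)) <= Rabs (v - x) + Rabs (u - t)) by (unfold Rminus at 1; exact H2).
  assert (Hsum : Rabs (u - t) / d + Rabs (v - x - (u - t)) / d + Rabs (v - x) / d < eps).
  { apply Rle_lt_trans with ((2 * Rabs (u - t) + 2 * Rabs (v - x)) / d).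
    - unfold Rdiv. assert (0 < / d) by (apply Rinv_0_lt_compat; auto). nra.
    - apply Rmult_lt_reg_r with d; auto. replace ((2 * Rabs (u - t) + 2 * Rabs (v - x)) / d * d) with
        (2 * Rabs (u - t) + 2 * Rabs (v - x)) by (field; lra).
      replace (eps * d / 4) with (eps * d * / 4) in Hu, Hv by (unfold Rdiv; ring). lra. }
  lra.
Qed.

Lemma cc_ex d p q f : 0 < d -> (forall x, continuity_pt f x) -> ex_RInt (fun x => 1 - cc d (f x)) p q.
Proof.
  intros Hd Hf. apply cont_ex_all. intros x. apply continuity_pt_minus.
  apply continuity_pt_const; intros u v; auto.
  apply (continuity_pt_comp f (cc d)); auto. apply cc_cont; auto.
Qed.

Lemma cont_id x : continuity_pt (fun y => y) x.
Proof. apply derivable_continuous_pt, derivable_pt_id. Qed.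
Lemma cont_shift a x : continuity_pt (fun y => y - a) x.
Proof. apply continuity_pt_minus. apply cont_id. apply continuity_pt_const; intros u v; auto. Qed.
Lemma cont_rshift a x : continuity_pt (fun y => a - y) x.
Proof. apply continuity_pt_minus. apply continuity_pt_const; intros u v; auto. apply cont_id. Qed.

Lemma CUT_shift d t s : 0 < d -> t <= s -> Defs.RInt (fun x => 1 - cc d (x - t)) t s <= 2 * d.
Proof.
  intros Hd Hts. assert (E := DR_transl (fun x => 1 - cc d (x - t)) 0 (s - t) t).
  replace (0 + t) with t in E by ring. replace (s - t + t) with s in E by ring. rewrite E.
  rewrite (DR_ext_all _ (fun u => 1 - cc d u)) by (intros; do 2 f_equal; ring).
  apply CUT; lra.
Qed.

Lemma CUT_refl d t s : 0 < d -> t <= s -> Defs.RInt (fun x => 1 - cc d (s - x)) t s <= 2 * d.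
Proof.
  intros Hd Hts. assert (E := DR_transl (fun x => 1 - cc d (s - x)) 0 (s - t) t).
  replace (0 + t) with t in E by ring. replace (s - t + t) with s in E by ring. rewrite E.
  rewrite DR_refl.
  rewrite (DR_ext_all _ (fun u => 1 - cc d u)) by (intros; do 2 f_equal; ring).
  apply CUT; lra.
Qed.

Lemma CUT_refl0 d x : 0 < d -> 0 <= x -> Defs.RInt (fun t => 1 - cc d (x - t)) 0 x <= 2 * d.
Proof.
  intros Hd Hx. rewrite DR_refl.
  rewrite (DR_ext_all _ (fun u => 1 - cc d u)) by (intros; do 2 f_equal; ring).
  apply CUT; lra.
Qed.

Lemma DR_lin3 (A K : R) (X Y : R -> R) a b : ex_RInt X a b -> ex_RInt Y a b ->
  Defs.RInt (fun x => K * (A + X x + Y x)) a b = K * (A * (b - a) + Defs.RInt X a b + Defs.RInt Y a b).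
Proof.
  intros EX EY. rewrite DR_scal. f_equal.
  rewrite DR_plus; auto. rewrite DR_plus; auto. rewrite DR_const. ring.
  apply exR_const. apply exR_plus; auto. apply exR_const.
Qed.

Lemma one_minus_prod3 a b c : 0 <= a <= 1 -> 0 <= b <= 1 -> 0 <= c <= 1 ->
  1 - a * b * c <= (1 - a) + (1 - b) + (1 - c).
Proof. intros. assert (0 <= a * b <= 1) by (split; nra). nra. Qed.

Lemma TF (F2 : R -> R -> R) s M : 0 <= s ->
  (forall t, 0 <= t <= s -> ex_RInt (F2 t) t s) ->
  ex_RInt (fun t => Defs.RInt (F2 t) t s) 0 s ->
  (forall x, 0 <= x <= s -> ex_RInt (fun t => F2 t x) 0 x) ->
  ex_RInt (fun x => Defs.RInt (fun t => F2 t x) 0 x) 0 s ->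
  (forall t x, 0 <= t -> t <= x -> x <= s -> Rabs (F2 t x) <= M) ->
  (forall t x, 0 < t -> t < x -> x < s -> continuity_2d_pt F2 t x) ->
  Defs.RInt (fun t => Defs.RInt (F2 t) t s) 0 s = Defs.RInt (fun x => Defs.RInt (fun t => F2 t x) 0 x) 0 s.
Proof.
  intros Hs H1 H2 H3 H4 H5 H6.
  set (M' := Rabs M + 1).
  assert (HM' : 0 < M') by (unfold M'; pose proof (Rabs_pos M); lra).
  assert (H5' : forall t x, 0 <= t -> t <= x -> x <= s -> Rabs (F2 t x) <= M').
  { intros. pose proof (H5 t x H H0 H7). pose proof (RRle_abs M). unfold M'; lra. }
  set (L := Defs.RInt (fun t => Defs.RInt (F2 t) t s) 0 s).
  set (Rr := Defs.RInt (fun x => Defs.RInt (fun t => F2 t x) 0 x) 0 s).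
  assert (Key : forall d, 0 < d -> Rabs (L - Rr) <= 12 * M' * s * d).
  { intros d Hd.
    set (g := fun t x => chi s d t x * F2 t x).
    assert (chi_pos : forall t x, 0 < chi s d t x -> d < t /\ d < x - t /\ d < s - x).
    { intros t x Hc. unfold chi in Hc. repeat split.
      - destruct (Rle_dec t d); auto. rewrite (cc_0 d t) in Hc by lra. lra. apply Rnot_le_lt; auto.
      - destruct (Rle_dec (x - t) d); [|lra]. rewrite (cc_0 d (x - t)) in Hc by lra. lra.
      - destruct (Rle_dec (s - x) d); [|lra]. rewrite (cc_0 d (s - x)) in Hc by lra. lra. }
    assert (gb : forall t x, Rabs (g t x) <= M' * chi s d t x).
    { intros t x. unfold g. pose proof (chi_range s d t x). destruct (Rlt_dec 0 (chi s d t x)) as [P|P].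
      - destruct (chi_pos t x P) as [A [B C]]. rewrite Rabs_mult, Rabs_pos_eq by lra.
        rewrite Rmult_comm. apply Rmult_le_compat_r; [lra|]. apply H5'; lra.
      - assert (chi s d t x = 0) by lra. rewrite H0, Rmult_0_l, Rabs_R0. lra. }
    assert (gc : forall t x, continuity_2d_pt g t x).
    { intros t x. destruct (Rlt_dec 0 t); destruct (Rlt_dec t x); destruct (Rlt_dec x s).
      all: try (apply continuity_2d_pt_mult; [apply chi_cont; auto| solve [apply H6; auto]]).
      all: assert (Z : chi s d t x = 0) by (unfold chi;
             first [rewrite (cc_0 d t) by lra | rewrite (cc_0 d (x - t)) by lra | rewrite (cc_0 d (s - x)) by lra]; ring).
      all: apply cont2_intro; intros eps He.
      all: destruct (cont2_elim (chi s d) t x (eps / M') (chi_cont s d t x Hd)) as [e [He' Hc]];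
             [apply Rdiv_lt_0_compat; auto|].
      all: exists e; split; auto; intros u v Hu Hv.
      all: assert (gtx : g t x = 0) by (unfold g; rewrite Z; ring).
      all: rewrite gtx, Rminus_0_r; eapply Rle_lt_trans; [apply gb|].
      all: specialize (Hc u v Hu Hv); rewrite Z, Rminus_0_r in Hc;
           rewrite Rabs_pos_eq in Hc by (apply chi_range).
      all: apply Rmult_lt_compat_l with (r := M') in Hc; auto.
      all: replace (M' * (eps / M')) with eps in Hc by (field; lra); auto. }
    assert (exg1 : forall t p q, ex_RInt (g t) p q).
    { intros. apply cont_ex_all. intros; apply cont2_slice2; auto. }
    assert (exg2 : forall x p q, ex_RInt (fun t => g t x) p q).
    { intros. apply cont_ex_all. intros; apply cont2_slice1; auto. }
    assert (G2 : forall t, 0 <= t <= s -> Defs.RInt (g t) t s = Defs.RInt (g t) 0 s).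
    { intros t Ht. rewrite <- (DR_Chasles (g t) 0 t s) by auto.
      rewrite (DR_ext (g t) (fun _ => 0) 0 t). rewrite DR_const; ring.
      intros x Hx. rewrite Rmin_left, Rmax_right in Hx by lra. unfold g, chi.
      rewrite (cc_0 d (x - t)) by lra. ring. }
    assert (G3 : forall x, 0 <= x <= s -> Defs.RInt (fun t => g t x) 0 x = Defs.RInt (fun t => g t x) 0 s).
    { intros x Hx. rewrite <- (DR_Chasles (fun t => g t x) 0 x s) by auto.
      rewrite (DR_ext (fun t => g t x) (fun _ => 0) x s). rewrite DR_const; ring.
      intros t Ht. rewrite Rmin_left, Rmax_right in Ht by lra. unfold g, chi.
      rewrite (cc_0 d (x - t)) by lra. ring. }
    assert (Lg : Defs.RInt (fun t => Defs.RInt (g t) t s) 0 s = Defs.RInt (fun x => Defs.RInt (fun t => g t x) 0 x) 0 s).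
    { rewrite (DR_ext (fun t => Defs.RInt (g t) t s) (fun t => Defs.RInt (g t) 0 s) 0 s).
      rewrite RF by auto.
      apply DR_ext. intros x Hx. rewrite Rmin_left, Rmax_right in Hx by lra. symmetry; apply G3; lra.
      intros t Ht. rewrite Rmin_left, Rmax_right in Ht by lra. apply G2; lra. }
    assert (exGL : ex_RInt (fun t => Defs.RInt (g t) t s) 0 s).
    { apply (exR_ext (fun t => Defs.RInt (g t) 0 s)).
      intros t Ht. rewrite Rmin_left, Rmax_right in Ht by lra. symmetry; apply G2; lra.
      apply cont_ex_all. intros; apply PC; auto. }
    assert (exGR : ex_RInt (fun x => Defs.RInt (fun t => g t x) 0 x) 0 s).
    { apply (exR_ext (fun x => Defs.RInt (fun t => g t x) 0 s)).
      intros x Hx. rewrite Rmin_left, Rmax_right in Hx by lra. symmetry; apply G3; lra.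
      apply cont_ex_all. intros; apply (PC (fun u v => g v u)). intros; apply cont2_swap; auto. }
    assert (diff_b : forall t x, 0 <= t -> t <= x -> x <= s ->
      Rabs (F2 t x - g t x) <= M' * ((1 - cc d t) + (1 - cc d (x - t)) + (1 - cc d (s - x)))).
    { intros t x A B C. unfold g. replace (F2 t x - chi s d t x * F2 t x) with ((1 - chi s d t x) * F2 t x) by ring.
      pose proof (chi_range s d t x). rewrite Rabs_mult, (Rabs_pos_eq (1 - chi s d t x)) by lra.
      pose proof (H5' t x A B C). pose proof (Rabs_pos (F2 t x)).
      assert (1 - chi s d t x <= (1 - cc d t) + (1 - cc d (x - t)) + (1 - cc d (s - x)))
        by (unfold chi; apply one_minus_prod3; apply cc_range).
      pose proof (cc_range d t). pose proof (cc_range d (x - t)). pose proof (cc_range d (s - x)).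
      nra. }
    assert (E1 : Rabs (L - Defs.RInt (fun t => Defs.RInt (g t) t s) 0 s) <= 6 * M' * s * d).
    { unfold L. rewrite <- DR_minus by auto.
      eapply Rle_trans. apply (DR_abs_le _ (fun t => M' * ((1 - cc d t) * s + 4 * d))); auto.
      - apply exR_minus; auto.
      - apply cont_ex_all. intros. apply continuity_pt_mult. apply continuity_pt_const; intros u v; auto.
        apply continuity_pt_plus. apply continuity_pt_mult. apply continuity_pt_minus.
        apply continuity_pt_const; intros u v; auto. apply cc_cont; auto.
        apply continuity_pt_const; intros u v; auto. apply continuity_pt_const; intros u v; auto.
      - intros t Ht. rewrite <- DR_minus by (auto; apply H1; lra).
        eapply Rle_trans. apply (DR_abs_le _ (fun x => M' * ((1 - cc d t) + (1 - cc d (x - t)) + (1 - cc d (s - x))))).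
        + lra.
        + apply exR_minus; auto. apply H1; lra.
        + apply (exR_ext (fun x => M' * ((1 - cc d t) + (1 - cc d (x - t)) + (1 - cc d (s - x))))); auto.
          apply cont_ex_all. intros. apply continuity_pt_mult. apply continuity_pt_const; intros u v; auto.
          apply continuity_pt_plus. apply continuity_pt_plus. apply continuity_pt_const; intros u v; auto.
          apply continuity_pt_minus. apply continuity_pt_const; intros u v; auto.
          apply (continuity_pt_comp (fun y => y - t) (cc d)). apply cont_shift. apply cc_cont; auto.
          apply continuity_pt_minus. apply continuity_pt_const; intros u v; auto.
          apply (continuity_pt_comp (fun y => s - y) (cc d)). apply cont_rshift. apply cc_cont; auto.
        + intros x Hx. apply diff_b; lra.
        + rewrite DR_lin3 by (apply cc_ex; auto; intros; first [apply cont_shift|apply cont_rshift]).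
          pose proof (CUT_shift d t s Hd ltac:(lra)). pose proof (CUT_refl d t s Hd ltac:(lra)).
          pose proof (cc_range d t).
          apply Rmult_le_compat_l; [lra|]. nra.
      - rewrite DR_scal. rewrite DR_plus. rewrite DR_const.
        rewrite (DR_ext_all _ (fun t => s * (1 - cc d t))) by (intros; ring). rewrite DR_scal.
        pose proof (CUT d s Hd Hs). apply Rmult_le_compat_l with (r := M') in H; [|lra].
        replace (6 * M' * s * d) with (M' * (s * (2 * d) + 4 * d * (s - 0))) by ring.
        apply Rmult_le_compat_l; [lra|]. apply Rplus_le_compat_r. apply Rmult_le_compat_l; auto.
        apply CUT; auto.
        + apply (exR_ext (fun t => s * (1 - cc d t))). intros; ring. apply exR_scal.
          apply (cc_ex d 0 s (fun y => y)); auto. apply cont_id.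
        + apply exR_const. }
    assert (E2 : Rabs (Defs.RInt (fun x => Defs.RInt (fun t => g t x) 0 x) 0 s - Rr) <= 6 * M' * s * d).
    { rewrite Rabs_minus_sym. unfold Rr. rewrite <- DR_minus by auto.
      eapply Rle_trans. apply (DR_abs_le _ (fun x => M' * (4 * d + (1 - cc d (s - x)) * s))); auto.
      - apply exR_minus; auto.
      - apply cont_ex_all. intros. apply continuity_pt_mult. apply continuity_pt_const; intros u v; auto.
        apply continuity_pt_plus. apply continuity_pt_const; intros u v; auto.
        apply continuity_pt_mult. apply continuity_pt_minus.
        apply continuity_pt_const; intros u v; auto.
        apply (continuity_pt_comp (fun y => s - y) (cc d)). apply cont_rshift. apply cc_cont; auto.
        apply continuity_pt_const; intros u v; auto.
      - intros x Hx. rewrite <- DR_minus by (auto; apply H3; lra).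
        eapply Rle_trans. apply (DR_abs_le _ (fun t => M' * ((1 - cc d (s - x)) + (1 - cc d t) + (1 - cc d (x - t))))).
        + lra.
        + apply exR_minus; auto. apply H3; lra.
        + apply cont_ex_all. intros. apply continuity_pt_mult. apply continuity_pt_const; intros u v; auto.
          apply continuity_pt_plus. apply continuity_pt_plus. apply continuity_pt_const; intros u v; auto.
          apply continuity_pt_minus. apply continuity_pt_const; intros u v; auto. apply cc_cont; auto.
          apply continuity_pt_minus. apply continuity_pt_const; intros u v; auto.
          apply (continuity_pt_comp (fun y => x - y) (cc d)). apply cont_rshift. apply cc_cont; auto.
        + intros t Ht. eapply Rle_trans. apply diff_b; lra. right; ring.
        + rewrite DR_lin3.
          2: apply (cc_ex d 0 x (fun y => y)); auto; apply cont_id.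
          2: apply cc_ex; auto; intros; apply cont_rshift.
          pose proof (CUT d x Hd ltac:(lra)). pose proof (CUT_refl0 d x Hd ltac:(lra)).
          pose proof (cc_range d (s - x)).
          apply Rmult_le_compat_l; [lra|]. nra.
      - rewrite DR_scal. rewrite DR_plus. rewrite DR_const.
        rewrite (DR_ext_all _ (fun t => s * (1 - cc d (s - t)))) by (intros; ring). rewrite DR_scal.
        replace (6 * M' * s * d) with (M' * (4 * d * (s - 0) + s * (2 * d))) by ring.
        apply Rmult_le_compat_l; [lra|]. apply Rplus_le_compat_l. apply Rmult_le_compat_l; auto.
        apply CUT_refl; auto.
        + apply exR_const.
        + apply (exR_ext (fun t => s * (1 - cc d (s - t)))). intros; ring. apply exR_scal.
          apply cc_ex; auto; intros; apply cont_rshift. }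
    replace (L - Rr) with ((L - Defs.RInt (fun t => Defs.RInt (g t) t s) 0 s) +
       (Defs.RInt (fun x => Defs.RInt (fun t => g t x) 0 x) 0 s - Rr)) by (rewrite Lg; ring).
    eapply Rle_trans. apply Rabs_triang. lra. }
  destruct (Req_dec L Rr) as [E|E]; auto. exfalso.
  set (e := Rabs (L - Rr)). assert (He : 0 < e) by (apply Rabs_pos_lt; lra).
  set (d := e / (24 * M' * (s + 1))).
  assert (Hd : 0 < d) by (unfold d; apply Rdiv_lt_0_compat; auto; apply Rmult_lt_0_compat; lra).
  specialize (Key d Hd). fold e in Key.
  assert (12 * M' * s * d < e).
  { unfold d. replace (12 * M' * s * (e / (24 * M' * (s + 1)))) with (e * (s / (2 * (s + 1)))) by (field; lra).
    assert (s / (2 * (s + 1)) < 1).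
    { apply Rmult_lt_reg_r with (2 * (s + 1)); [lra|]. unfold Rdiv; rewrite Rmult_assoc, Rinv_l; lra. }
    nra. }
  lra.
Qed.

Lemma cont2_of_2nd (f : R -> R) x y : continuity_pt f y -> continuity_2d_pt (fun _ v => f v) x y.
Proof.
  intros H. apply cont2_intro. intros eps He.
  destruct (H eps He) as [d [Hd H']]. exists d; split; auto. intros u v Hu Hv.
  destruct (Req_dec v y) as [->|Hne]. rewrite Rminus_diag, Rabs_R0; auto.
  apply H'. split. split; [exact I|auto]. simpl; unfold R_dist; auto.
Qed.

Lemma conv2_cont_comp N s M t0 x0 : conv2 N s -> (forall t u, inTri s t u -> Rabs (N t u) <= M) ->
  0 < t0 -> t0 < x0 -> x0 < s -> continuity_2d_pt (fun t x => N t (x - t)) t0 x0.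
Proof.
  intros Hc HM H1 H2 H3.
  set (d := Rmin t0 (Rmin (x0 - t0) (s - x0)) / 3).
  assert (Hd : 0 < d) by (unfold d; apply Rdiv_lt_0_compat; [repeat apply Rmin_pos; lra|lra]).
  pose proof (Rmin_l t0 (Rmin (x0 - t0) (s - x0))).
  pose proof (Rmin_r t0 (Rmin (x0 - t0) (s - x0))).
  pose proof (Rmin_l (x0 - t0) (s - x0)). pose proof (Rmin_r (x0 - t0) (s - x0)).
  assert (Ed : 3 * d = Rmin t0 (Rmin (x0 - t0) (s - x0))) by (unfold d; field).
  assert (M0 : 0 <= M) by (pose proof (HM t0 (x0 - t0) ltac:(unfold inTri; lra)); pose proof (Rabs_pos (N t0 (x0 - t0))); lra).
  apply cont2_intro. intros eps He.
  exists (Rmin (d / 2) (eps * d / (4 * (2 * M + 1)))). split.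
  { apply Rmin_pos. lra. apply Rdiv_lt_0_compat. nra. lra. }
  intros u v Hu Hv. pose proof (Rmin_l (d / 2) (eps * d / (4 * (2 * M + 1)))).
  pose proof (Rmin_r (d / 2) (eps * d / (4 * (2 * M + 1)))).
  set (e := Rmin (d / 2) (eps * d / (4 * (2 * M + 1)))) in *.
  pose proof (Rabs_pos (u - t0)).
  assert (Hu' : Rabs (u - t0) <= d) by lra.
  assert (Hv' : Rabs (v - u - (x0 - t0)) <= 2 * e).
  { replace (v - u - (x0 - t0)) with ((v - x0) - (u - t0)) by ring.
    eapply Rle_trans. apply Rabs_triang. rewrite Rabs_Ropp. lra. }
  eapply Rle_lt_trans. apply (conv2_modulus N s M t0 (x0 - t0) d); auto; try lra.
  apply Rle_lt_trans with (2 * M * (2 * e) / d).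
  - unfold Rdiv. apply Rmult_le_compat_r. left; apply Rinv_0_lt_compat; auto.
    apply Rmult_le_compat_l. lra. apply Rmax_lub; lra.
  - apply Rle_lt_trans with (2 * M * (2 * (eps * d / (4 * (2 * M + 1)))) / d).
    + unfold Rdiv. apply Rmult_le_compat_r. left; apply Rinv_0_lt_compat; auto. nra.
    + replace (2 * M * (2 * (eps * d / (4 * (2 * M + 1)))) / d) with (eps * (M / (2 * M + 1))) by (field; lra).
      assert (M / (2 * M + 1) < 1).
      { apply Rmult_lt_reg_r with (2 * M + 1); [lra|]. unfold Rdiv; rewrite Rmult_assoc, Rinv_l; lra. }
      nra.
Qed.

Lemma DR_conv1 (F : R -> R -> R) a b : a <= b ->
  (forall x, a <= x <= b -> ex_RInt (F x) 0 1) ->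
  (forall v, 0 <= v <= 1 -> conv1 (fun x => F x v) a b) ->
  conv1 (fun x => Defs.RInt (F x) 0 1) a b.
Proof.
  intros Hab Hex Hc x y l Hx Hy Hl.
  assert (Hxy : a <= l * x + (1 - l) * y <= b) by nra.
  rewrite <- !DR_scal. rewrite <- DR_plus by (apply exR_scal; auto).
  apply DR_le; try lra; auto. apply exR_plus; apply exR_scal; auto.
  intros v Hv. apply (Hc v ltac:(lra)); auto.
Qed.

Definition swap01 (v : list R) : list R :=
  match v with a :: b :: w => b :: a :: w | _ => v end.

Lemma inT_swap01 k s v : inT k s v -> inT k s (swap01 v).
Proof.
  intros [L [P S]]. destruct v as [|a [|b w]]; simpl; try (split; auto; fail).
  split; [simpl in *; auto|split].
  - intros x Hx. apply P. simpl in *. tauto.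
  - unfold sumL in *; simpl in *; lra.
Qed.

Lemma lc_swap01 l u v : length u = length v -> swap01 (lc l u v) = lc l (swap01 u) (swap01 v).
Proof.
  intros H. destruct u as [|a [|b u]]; destruct v as [|c [|d v]]; simpl in *; try lia; auto.
Qed.

Lemma convT_swap01 k s h : convT k s h -> convT k s (fun v => h (swap01 v)).
Proof.
  intros Hc. apply (convT_comp k s h k s swap01); auto.
  - intros; apply inT_swap01; auto.
  - intros u v l Hu Hv _. apply lc_swap01. rewrite (inT_len _ _ _ Hu), (inT_len _ _ _ Hv); auto.
Qed.

Lemma inT_smap1 k c w : 0 <= c -> inT k 1 w -> inT k c (smap c w).
Proof. intros. rewrite <- (Rmult_1_r c) at 1. apply inT_smap; auto. Qed.

Lemma inTri_comb s t1 u1 t2 u2 l : inTri s t1 u1 -> inTri s t2 u2 -> 0 <= l <= 1 ->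
  inTri s (l * t1 + (1 - l) * t2) (l * u1 + (1 - l) * u2).
Proof. unfold inTri; intros; nra. Qed.

Lemma TRI k s h : 0 <= s -> convT (S (S k)) s h ->
  simplex_int (S (S k)) h s = Defs.RInt (fun x => Defs.RInt (fun t =>
     simplex_int k (fun w => h (t :: (x - t) :: w)) (s - x)) 0 x) 0 s.
Proof.
  intros Hs Hc.
  set (N := fun t u => simplex_int k (fun w => h (t :: u :: smap (s - t - u) w)) 1).
  assert (PN : forall t u, simplex_int k (fun w => h (t :: u :: w)) (s - t - u) = (s - t - u) ^ k * N t u).
  { intros. unfold N. rewrite (si_ext_s k _ (s - t - u) ((s - t - u) * 1)) by ring. apply si_scale. }
  assert (Hmem : forall t u w, inTri s t u -> inT k 1 w -> inT (S (S k)) s (t :: u :: smap (s - t - u) w)).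
  { intros t u w [Ht [Hu Htu]] Hw. apply inT_cons; split; auto. apply inT_cons; split; auto.
    apply inT_smap1; auto. lra. }
  assert (HGI : forall t u, inTri s t u -> GI k (fun w => h (t :: u :: smap (s - t - u) w)) 1).
  { intros t u Htu. apply CT; [lra|].
    apply (convT_comp (S (S k)) s h k 1 (fun w => t :: u :: smap (s - t - u) w)); auto.
    intros w1 w2 l Hw1 Hw2 Hl. rewrite !lc_cons. f_equal. ring. f_equal. ring.
    symmetry; apply lc_smap_same. rewrite (inT_len _ _ _ Hw1), (inT_len _ _ _ Hw2); auto. }
  assert (HN : conv2 N s).
  { intros t1 u1 t2 u2 l T1 T2 Hl. unfold N. apply si_conv; auto; try lra.
    apply HGI. apply inTri_comb; auto.
    intros w Hw.
    replace (s - (l * t1 + (1 - l) * t2) - (l * u1 + (1 - l) * u2)) with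
      (l * (s - t1 - u1) + (1 - l) * (s - t2 - u2)) by ring.
    rewrite <- lc_smap_diff. rewrite <- !lc_cons. apply Hc; auto. }
  destruct (conv2_bdd N s Hs HN) as [MN HMN].
  assert (MN0 : 0 <= MN) by (pose proof (HMN 0 0 ltac:(unfold inTri; lra)); pose proof (Rabs_pos (N 0 0)); lra).
  set (R2 := fun t x => (s - x) ^ k * N t (x - t)).
  assert (ER2 : forall t x, simplex_int k (fun w => h (t :: (x - t) :: w)) (s - x) = R2 t x).
  { intros. unfold R2. rewrite (si_ext_s k _ (s - x) (s - t - (x - t))) by ring. rewrite PN.
    f_equal. f_equal. ring. }
  rewrite (DR_ext_all _ (fun x => Defs.RInt (fun t => R2 t x) 0 x)).
  2: { intros x; apply DR_ext_all; intros t; apply ER2. }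
  assert (EL : forall t, simplex_int (S k) (fun v => h (t :: v)) (s - t) = Defs.RInt (R2 t) t s).
  { intros t. change (simplex_int (S k) (fun v => h (t :: v)) (s - t)) with
      (Defs.RInt (fun u => simplex_int k (fun w => h (t :: u :: w)) (s - t - u)) 0 (s - t)).
    assert (E := DR_transl (R2 t) 0 (s - t) t).
    replace (0 + t) with t in E by ring. replace (s - t + t) with s in E by ring. rewrite E.
    apply DR_ext_all; intro u. unfold R2. rewrite PN.
    replace (u + t - t) with u by ring. replace (s - (u + t)) with (s - t - u) by ring. reflexivity. }
  change (simplex_int (S (S k)) h s) with (Defs.RInt (fun t => simplex_int (S k) (fun v => h (t :: v)) (s - t)) 0 s).
  rewrite (DR_ext_all _ (fun t => Defs.RInt (R2 t) t s)) by (intros; apply EL).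
  assert (powb : forall x, 0 <= x <= s -> Rabs ((s - x) ^ k) <= s ^ k).
  { intros x Hx. rewrite Rabs_pos_eq by (apply pow_le; lra). apply pow_incr; lra. }
  apply (TF R2 s (s ^ k * MN)); auto.
  - intros t Ht. unfold R2. apply conv1_mul_ex with (s ^ k); try lra.
    + intros x1 x2 l Hx1 Hx2 Hl.
      replace (l * x1 + (1 - l) * x2 - t) with (l * (x1 - t) + (1 - l) * (x2 - t)) by ring.
      replace t with (l * t + (1 - l) * t) at 1 by ring.
      apply HN; unfold inTri; try lra.
    + intros x Hx. apply powb; lra.
    + intros; apply cont_pow_lin.
  - destruct (CT (S (S k)) s h Hs Hc) as [E _].
    apply (exR_ext (fun t => simplex_int (S k) (fun v => h (t :: v)) (s - t))); auto.
  - intros x Hx. unfold R2.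
    apply (conv1_mul_ex (fun t => N t (x - t)) (fun _ => (s - x) ^ k) 0 x (Rabs ((s - x) ^ k))); try lra.
    + intros t1 t2 l Ht1 Ht2 Hl.
      replace (x - (l * t1 + (1 - l) * t2)) with (l * (x - t1) + (1 - l) * (x - t2)) by ring.
      apply HN; unfold inTri; try lra.
    + intros; lra.
    + intros; apply continuity_pt_const; intros u v; auto.
  - set (K := fun x => Defs.RInt (fun v => N (x * v) (x - x * v)) 0 1).
    apply (exR_ext (fun x => ((s - x) ^ k * x) * K x)).
    { intros x Hx. rewrite Rmin_left, Rmax_right in Hx by lra. unfold R2, K.
      rewrite DR_scal. rewrite Rmult_assoc. f_equal. symmetry.
      assert (E := DR_scale (fun t => N t (x - t)) x 1 ltac:(lra)). rewrite Rmult_1_r in E.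
      rewrite E. reflexivity. }
    apply conv1_mul_ex with (s ^ k * s); try lra.
    + apply DR_conv1; try lra.
      * intros x Hx. apply conv1_ex; try lra. intros v1 v2 l Hv1 Hv2 Hl.
        replace (x * (l * v1 + (1 - l) * v2)) with (l * (x * v1) + (1 - l) * (x * v2)) by ring.
        replace (x - (l * (x * v1) + (1 - l) * (x * v2))) with (l * (x - x * v1) + (1 - l) * (x - x * v2)) by ring.
        apply HN; unfold inTri; nra.
      * intros v Hv x1 x2 l Hx1 Hx2 Hl. simpl.
        replace ((l * x1 + (1 - l) * x2) * v) with (l * (x1 * v) + (1 - l) * (x2 * v)) by ring.
        replace (l * x1 + (1 - l) * x2 - (l * (x1 * v) + (1 - l) * (x2 * v))) with
          (l * (x1 - x1 * v) + (1 - l) * (x2 - x2 * v)) by ring.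
        apply HN; unfold inTri; nra.
    + intros x Hx. rewrite Rabs_mult. rewrite (Rabs_pos_eq x) by lra.
      apply Rmult_le_compat; try apply Rabs_pos; try lra. apply powb; lra.
    + intros. apply continuity_pt_mult. apply cont_pow_lin. apply cont_id.
  - intros t x Ht Htx Hx. unfold R2. rewrite Rabs_mult. apply Rmult_le_compat; try apply Rabs_pos.
    apply powb; lra. apply HMN; unfold inTri; lra.
  - intros t x Ht Htx Hx. unfold R2. apply continuity_2d_pt_mult.
    + apply (cont2_of_2nd (fun v => (s - v) ^ k)). apply cont_pow_lin.
    + apply (conv2_cont_comp N s MN); auto.
Qed.

Lemma SW0 k s h : 0 <= s -> convT (S (S k)) s h ->
  simplex_int (S (S k)) (fun v => h (swap01 v)) s = simplex_int (S (S k)) h s.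
Proof.
  intros Hs Hc. rewrite (TRI k s (fun v => h (swap01 v))) by (auto; apply convT_swap01; auto).
  rewrite (TRI k s h) by auto. apply DR_ext_all; intros x.
  rewrite DR_refl. apply DR_ext_all; intros t. apply si_ext_len; intros w _.
  simpl. replace (x - (x - t)) with t by ring. reflexivity.
Qed.

Definition rot1 (v : list R) : list R := match v with [] => [] | a :: w => w ++ [a] end.

Lemma lc_app l u1 : forall v1 u2 v2, length u1 = length v1 ->
  lc l (u1 ++ u2) (v1 ++ v2) = lc l u1 v1 ++ lc l u2 v2.
Proof.
  induction u1; intros v1 u2 v2 H; destruct v1; simpl in *; try lia; auto.
  f_equal. apply IHu1. lia.
Qed.

Lemma inT_rot1 k s v : inT k s v -> inT k s (rot1 v).
Proof.
  intros [L [P S]]. destruct v as [|a w]; simpl; [split; auto|].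
  split; [|split].
  - rewrite length_app; simpl in *; lia.
  - intros x Hx. apply in_app_iff in Hx. apply P. simpl. destruct Hx as [Hx|[Hx|[]]]; auto.
  - rewrite sumL_app. unfold sumL in *; simpl in *. lra.
Qed.

Lemma lc_rot1 l u v : length u = length v -> rot1 (lc l u v) = lc l (rot1 u) (rot1 v).
Proof.
  intros H. destruct u as [|a u]; destruct v as [|b v]; simpl in *; try lia; auto.
  rewrite lc_app by lia. reflexivity.
Qed.

Lemma convT_rot1 k s h : convT k s h -> convT k s (fun v => h (rot1 v)).
Proof.
  intros Hc. apply (convT_comp k s h k s rot1); auto.
  - intros; apply inT_rot1; auto.
  - intros u v l Hu Hv _. apply lc_rot1. rewrite (inT_len _ _ _ Hu), (inT_len _ _ _ Hv); auto.
Qed.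

Lemma ROT1 k : forall s h, 0 <= s -> convT (S k) s h ->
  simplex_int (S k) (fun v => h (rot1 v)) s = simplex_int (S k) h s.
Proof.
  induction k; intros s h Hs Hc.
  - apply si_ext_len. intros v Hv. destruct v as [|a [|b w]]; simpl in Hv; try lia. reflexivity.
  - rewrite <- (SW0 k s (fun v => h (rot1 v))) by (auto; apply convT_rot1; auto).
    change (Defs.RInt (fun t => simplex_int (S k) (fun v => h (rot1 (swap01 (t :: v)))) (s - t)) 0 s =
            Defs.RInt (fun t => simplex_int (S k) (fun v => h (t :: v)) (s - t)) 0 s).
    apply DR_ext. intros t Ht. rewrite Rmin_left, Rmax_right in Ht by lra.
    rewrite <- (IHk (s - t) (fun v => h (t :: v))) by (try lra; apply convT_slice; auto; lra).
    apply si_ext_len. intros v Hv. destruct v as [|u w]; simpl in Hv; try lia. reflexivity.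
Qed.

Fixpoint rotn (n : nat) (v : list R) : list R :=
  match n with O => v | S n' => rotn n' (rot1 v) end.

Lemma rotn_app u : forall w, rotn (length u) (u ++ w) = w ++ u.
Proof.
  induction u; intros w; simpl. rewrite app_nil_r; auto.
  rewrite <- app_assoc. rewrite IHu. rewrite <- app_assoc. reflexivity.
Qed.

Lemma convT_rotn n : forall k s h, convT k s h -> convT k s (fun v => h (rotn n v)).
Proof.
  induction n; intros k s h Hc; simpl; auto.
  apply (convT_rot1 k s (fun v => h (rotn n v))). apply IHn; auto.
Qed.

Lemma ROTN n : forall k s h, 0 <= s -> convT (S k) s h ->
  simplex_int (S k) (fun v => h (rotn n v)) s = simplex_int (S k) h s.
Proof.
  induction n; intros k s h Hs Hc; [reflexivity|].
  transitivity (simplex_int (S k) (fun v => h (rotn n v)) s).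
  - apply (ROT1 k s (fun v => h (rotn n v))); auto. apply convT_rotn; auto.
  - apply IHn; auto.
Qed.

Fixpoint bc (ps : list vec) (cs : list R) (j : nat) : R :=
  match ps, cs with
  | p :: ps', c :: cs' => c * p j + bc ps' cs' j
  | _, _ => 0
  end.

Lemma FP_bc y0 ys : forall ts j, length ys = length ts ->
  face_point y0 ys ts j = bc (y0 :: ys) ((1 - sumL ts) :: ts) j.
Proof.
  induction ys as [|y ys IH]; intros ts j H; destruct ts as [|t ts]; simpl in H; try lia.
  - simpl. unfold sumL; simpl. ring.
  - simpl face_point. unfold vadd, vscale, vsub. rewrite IH by lia. simpl. unfold sumL; simpl. ring.
Qed.

Lemma bc_app ps1 : forall ps2 cs1 cs2 j, length ps1 = length cs1 ->
  bc (ps1 ++ ps2) (cs1 ++ cs2) j = bc ps1 cs1 j + bc ps2 cs2 j.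
Proof.
  induction ps1; intros ps2 cs1 cs2 j H; destruct cs1; simpl in *; try lia.
  - ring.
  - rewrite IHps1 by lia. ring.
Qed.

Lemma bc_smap ps : forall cs c j, bc ps (smap c cs) j = c * bc ps cs j.
Proof.
  induction ps; intros cs c j; destruct cs; unfold smap in *; simpl; try ring.
  rewrite IHps. ring.
Qed.

Lemma bc_lc ps : forall cs1 cs2 l j, length cs1 = length cs2 ->
  bc ps (lc l cs1 cs2) j = l * bc ps cs1 j + (1 - l) * bc ps cs2 j.
Proof.
  induction ps; intros cs1 cs2 l j H; destruct cs1; destruct cs2; simpl in *; try lia; try ring.
  rewrite IHps by lia. ring.
Qed.

Lemma bc_zero ps : forall cs j, (forall z, In z cs -> z = 0) -> bc ps cs j = 0.
Proof.
  induction ps; intros cs j H; destruct cs; simpl; auto.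
  rewrite IHps. rewrite (H r) by (left; auto). ring. intros; apply H; right; auto.
Qed.

Lemma face_lc y0 ys u v l j : length ys = length u -> length u = length v ->
  face_point y0 ys (lc l u v) j = l * face_point y0 ys u j + (1 - l) * face_point y0 ys v j.
Proof.
  intros H1 H2. rewrite !FP_bc; try lia. 2: rewrite lc_len; lia.
  rewrite lc_sum by lia.
  replace ((1 - (l * sumL u + (1 - l) * sumL v)) :: lc l u v) with
    (lc l ((1 - sumL u) :: u) ((1 - sumL v) :: v)) by (simpl; f_equal; ring).
  apply bc_lc. simpl; lia.
Qed.

Fixpoint lamOf (is : list nat) (cs : list R) (m : nat) : R :=
  match is, cs with
  | i :: is', c :: cs' => (if Nat.eq_dec m i then c else 0) + lamOf is' cs' m
  | _, _ => 0
  end.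

Lemma sum_ind_pt (c : R) i N : (i <= N)%nat ->
  sum_f_R0 (fun m => if Nat.eq_dec m i then c else 0) N = c.
Proof.
  induction N; intros H; cbn [sum_f_R0].
  - replace i with 0%nat by lia. destruct (Nat.eq_dec 0 0); [auto|lia].
  - destruct (Nat.eq_dec (S N) i).
    + subst. assert (E : sum_f_R0 (fun m => if Nat.eq_dec m (S N) then c else 0) N = sum_f_R0 (fun _ => 0) N).
      { apply sum_eq. intros m Hm. destruct (Nat.eq_dec m (S N)); [lia|auto]. }
      rewrite E, sum_cte. destruct (Nat.eq_dec (S N) (S N)); [ring|lia].
    + rewrite IHN by lia. ring.
Qed.

Lemma sum_ind_ptx (c : R) i N (g : nat -> R) : (i <= N)%nat ->
  sum_f_R0 (fun m => (if Nat.eq_dec m i then c else 0) * g m) N = c * g i.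
Proof.
  intros H. rewrite (sum_eq _ (fun m => if Nat.eq_dec m i then c * g i else 0)).
  apply sum_ind_pt; auto.
  intros m _. destruct (Nat.eq_dec m i); subst; ring.
Qed.

Lemma lamOf_props (x : nat -> vec) N is : forall cs, length is = length cs ->
  (forall i, In i is -> (i <= N)%nat) ->
  sum_f_R0 (lamOf is cs) N = sumL cs /\
  (forall j, bc (map x is) cs j = sum_f_R0 (fun m => lamOf is cs m * x m j) N) /\
  ((forall z, In z cs -> 0 <= z) -> forall m, 0 <= lamOf is cs m).
Proof.
  induction is as [|i is IH]; intros cs Hl Hb; destruct cs as [|c cs]; simpl in Hl; try lia.
  - simpl. split; [|split].
    + rewrite sum_cte. unfold sumL; simpl; ring.
    + intros j. assert (E : sum_f_R0 (fun m => 0 * x m j) N = sum_f_R0 (fun _ => 0) N) by (apply sum_eq; intros; ring).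
      rewrite E, sum_cte. ring.
    + intros; lra.
  - destruct (IH cs ltac:(lia) ltac:(intros; apply Hb; right; auto)) as [A [B C]].
    assert (Hi : (i <= N)%nat) by (apply Hb; left; auto).
    split; [|split].
    + cbn [lamOf]. rewrite plus_sum. rewrite sum_ind_pt by auto. rewrite A. rewrite sumL_cons. ring.
    + intros j. cbn [map bc lamOf].
      rewrite (sum_eq _ (fun m => (if Nat.eq_dec m i then c else 0) * x m j + lamOf is cs m * x m j)).
      2: { intros; ring. }
      rewrite plus_sum. rewrite sum_ind_ptx by auto. rewrite B. ring.
    + intros Hz m. cbn [lamOf]. assert (0 <= c) by (apply Hz; left; auto).
      assert (0 <= lamOf is cs m) by (apply C; intros; apply Hz; right; auto).
      destruct (Nat.eq_dec m i); lra.
Qed.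

Lemma FACE_IN n (x : nat -> vec) i0 idx ts : (forall i, In i (i0 :: idx) -> (i <= n)%nat) ->
  inT (length idx) 1 ts -> in_simplex n x (face_point (x i0) (map x idx) ts).
Proof.
  intros Hb [Hl [Hp Hs]].
  destruct (lamOf_props x n (i0 :: idx) ((1 - sumL ts) :: ts) ltac:(simpl; lia) Hb) as [A [B C]].
  exists (lamOf (i0 :: idx) ((1 - sumL ts) :: ts)). split; [|split].
  - intros i _. apply C. intros z [<-|Hz]; [lra|auto].
  - rewrite A. rewrite sumL_cons. ring.
  - intros j. rewrite FP_bc by (rewrite length_map; lia). rewrite <- B. reflexivity.
Qed.

Lemma vec_eq (p q : vec) : (forall j, p j = q j) -> p = q.
Proof. intros; apply functional_extensionality; auto. Qed.

Lemma conv_face n (x : nat -> vec) f i0 idx : convex_on (in_simplex n x) f ->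
  (forall i, In i (i0 :: idx) -> (i <= n)%nat) ->
  convT (length idx) 1 (fun ts => f (face_point (x i0) (map x idx) ts)).
Proof.
  intros Hf Hb u v l Hu Hv Hl.
  replace (face_point (x i0) (map x idx) (lc l u v)) with
    (vadd (vscale l (face_point (x i0) (map x idx) u)) (vscale (1 - l) (face_point (x i0) (map x idx) v))).
  - apply Hf; auto; apply FACE_IN; auto.
  - apply vec_eq; intros j. unfold vadd, vscale. rewrite face_lc; auto.
    rewrite length_map, (inT_len _ _ _ Hu); auto.
    rewrite (inT_len _ _ _ Hu), (inT_len _ _ _ Hv); auto.
Qed.

Lemma sumL_nonneg u : (forall z, In z u -> 0 <= z) -> 0 <= sumL u.
Proof.
  induction u; intros H; unfold sumL; simpl. lra. fold (sumL u).
  assert (0 <= a) by (apply H; left; auto). assert (0 <= sumL u) by (apply IHu; intros; apply H; right; auto). lra.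
Qed.

Lemma elem_le_sum u z : (forall z, In z u -> 0 <= z) -> In z u -> z <= sumL u.
Proof.
  induction u; intros H Hz; simpl in Hz; [tauto|]. rewrite sumL_cons. destruct Hz as [<-|Hz].
  - pose proof (sumL_nonneg u ltac:(intros; apply H; right; auto)). lra.
  - assert (0 <= a) by (apply H; left; auto). pose proof (IHu ltac:(intros; apply H; right; auto) Hz). lra.
Qed.

Lemma inT_zero a u : inT a 0 u -> forall z, In z u -> z = 0.
Proof.
  intros [L [P S]] z Hz. pose proof (elem_le_sum u z P Hz). pose proof (P z Hz). lra.
Qed.

Lemma smap_zero c u : (forall z, In z u -> z = 0) -> smap c u = u.
Proof.
  induction u; intros H; unfold smap in *; simpl; auto. f_equal.
  rewrite (H a) by (left; auto). ring. apply IHu; intros; apply H; right; auto.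
Qed.

Lemma inT_sinv a c u : 0 <= c -> inT a c u -> inT a 1 (smap (/ c) u).
Proof.
  intros Hc Hu. destruct (Req_dec c 0) as [E|E].
  - subst. rewrite smap_zero by (apply inT_zero with a; auto).
    destruct Hu as [L [P S]]. split; auto. split; auto. lra.
  - replace 1 with (/ c * c) by (field; auto). apply inT_smap; auto.
    left; apply Rinv_0_lt_compat; lra.
Qed.

Lemma lc_sinv a : forall u1 u2 c1 c2 l, length u1 = a -> length u2 = a ->
  0 <= c1 -> 0 <= c2 -> 0 <= l <= 1 -> 0 < l * c1 + (1 - l) * c2 ->
  (c1 = 0 -> forall z, In z u1 -> z = 0) -> (c2 = 0 -> forall z, In z u2 -> z = 0) ->
  smap (/ (l * c1 + (1 - l) * c2)) (lc l u1 u2) =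
  lc (l * c1 / (l * c1 + (1 - l) * c2)) (smap (/ c1) u1) (smap (/ c2) u2).
Proof.
  induction a; intros u1 u2 c1 c2 l L1 L2 H1 H2 Hl Hc Z1 Z2;
    destruct u1 as [|x u1]; destruct u2 as [|y u2]; simpl in L1, L2; try lia; [reflexivity|].
  unfold smap in *; simpl. f_equal.
  - destruct (Req_dec c1 0) as [E1|E1].
    + destruct (Req_dec c2 0) as [E2|E2].
      * subst. lra.
      * rewrite (Z1 E1 x) by (left; auto). rewrite (Rmult_0_r (/ c1)). subst c1. field. repeat split; try lra; nra.
    + destruct (Req_dec c2 0) as [E2|E2].
      * rewrite (Z2 E2 y) by (left; auto). rewrite (Rmult_0_r (/ c2)). subst c2. field. repeat split; try lra; nra.
      * field. repeat split; try lra.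
  - apply IHa; auto; try lia.
    intros E z Hz; apply Z1; auto; right; auto. intros E z Hz; apply Z2; auto; right; auto.
Qed.

Definition persp (G : list R -> R) (c : R) (u : list R) : R := c * G (smap (/ c) u).

Lemma PERSP a G : convT a 1 G -> forall c1 c2 u1 u2 l, 0 <= c1 -> 0 <= c2 ->
  inT a c1 u1 -> inT a c2 u2 -> 0 <= l <= 1 ->
  persp G (l * c1 + (1 - l) * c2) (lc l u1 u2) <= l * persp G c1 u1 + (1 - l) * persp G c2 u2.
Proof.
  intros Hc c1 c2 u1 u2 l H1 H2 U1 U2 Hl. unfold persp.
  set (c := l * c1 + (1 - l) * c2).
  assert (Hc0 : 0 <= c) by (unfold c; nra).
  destruct (Req_dec c 0) as [E|E].
  - assert (l * c1 = 0) by (unfold c in E; nra). assert ((1 - l) * c2 = 0) by (unfold c in E; nra).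
    rewrite E. replace (l * (c1 * G (smap (/ c1) u1)) + (1 - l) * (c2 * G (smap (/ c2) u2))) with
      ((l * c1) * G (smap (/ c1) u1) + ((1 - l) * c2) * G (smap (/ c2) u2)) by ring.
    rewrite H, H0. lra.
  - assert (Hcp : 0 < c) by lra.
    set (mu := l * c1 / c).
    assert (Hmu : 0 <= mu <= 1).
    { unfold mu. split. apply Rdiv_le_0_compat; nra.
      apply Rmult_le_reg_r with c; auto. unfold Rdiv; rewrite Rmult_assoc, Rinv_l by lra. unfold c; nra. }
    assert (EQ : smap (/ c) (lc l u1 u2) = lc mu (smap (/ c1) u1) (smap (/ c2) u2)).
    { unfold mu, c. apply lc_sinv with (a := a).
      - apply (inT_len _ _ _ U1).
      - apply (inT_len _ _ _ U2).
      - auto.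
      - auto.
      - auto.
      - fold c; lra.
      - intros ->; apply inT_zero with a; auto.
      - intros ->; apply inT_zero with a; auto. }
    rewrite EQ.
    assert (Q : G (lc mu (smap (/ c1) u1) (smap (/ c2) u2)) <= mu * G (smap (/ c1) u1) + (1 - mu) * G (smap (/ c2) u2)).
    { apply Hc; auto; apply inT_sinv; auto. }
    apply Rmult_le_compat_l with (r := c) in Q; [|lra].
    eapply Rle_trans. apply Q. right.
    assert (c * mu = l * c1) by (unfold mu; field; lra).
    assert (c * (1 - mu) = (1 - l) * c2).
    { replace (c * (1 - mu)) with (c - c * mu) by ring. rewrite H. unfold c. ring. }
    replace (c * (mu * G (smap (/ c1) u1) + (1 - mu) * G (smap (/ c2) u2))) with
      ((c * mu) * G (smap (/ c1) u1) + (c * (1 - mu)) * G (smap (/ c2) u2)) by ring.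
    rewrite H, H0. ring.
Qed.

Lemma firstn_lc l a : forall u v, firstn a (lc l u v) = lc l (firstn a u) (firstn a v).
Proof. induction a; intros u v; destruct u; destruct v; simpl; auto. f_equal; auto. Qed.

Lemma skipn_lc l a : forall u v, skipn a (lc l u v) = lc l (skipn a u) (skipn a v).
Proof. induction a; intros u v; destruct u; destruct v; simpl; auto. destruct (skipn a u); auto. Qed.

Lemma tl_lc l u v : tl (lc l u v) = lc l (tl u) (tl v).
Proof. destruct u; destruct v; simpl; auto. destruct u; auto. Qed.

Definition HYf (FY : list R -> R) (a : nat) (ts : list R) : R :=
  persp FY (1 - sumL (skipn a ts)) (firstn a ts).
Definition HZf (FZ : list R -> R) (a : nat) (ts : list R) : R :=
  persp FZ (sumL (skipn a ts)) (tl (skipn a ts)).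

Lemma inT_split a b ts : inT (a + b) 1 ts ->
  length (firstn a ts) = a /\ length (skipn a ts) = b /\
  (forall z, In z (firstn a ts) -> 0 <= z) /\ (forall z, In z (skipn a ts) -> 0 <= z) /\
  sumL (firstn a ts) + sumL (skipn a ts) <= 1.
Proof.
  intros [L [P S]]. rewrite <- (firstn_skipn a ts) in P, S.
  split; [|split; [|split; [|split]]].
  - rewrite length_firstn. lia.
  - rewrite length_skipn. lia.
  - intros z Hz. apply P. apply in_app_iff; auto.
  - intros z Hz. apply P. apply in_app_iff; auto.
  - rewrite sumL_app in S. auto.
Qed.

Lemma convT_HY a b FY : convT a 1 FY -> convT (a + b) 1 (HYf FY a).
Proof.
  intros Hc ts1 ts2 l H1 H2 Hl. unfold HYf.
  destruct (inT_split a b ts1 H1) as [A1 [B1 [C1 [D1 E1]]]].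
  destruct (inT_split a b ts2 H2) as [A2 [B2 [C2 [D2 E2]]]].
  rewrite firstn_lc, skipn_lc. rewrite lc_sum by lia.
  replace (1 - (l * sumL (skipn a ts1) + (1 - l) * sumL (skipn a ts2))) with
    (l * (1 - sumL (skipn a ts1)) + (1 - l) * (1 - sumL (skipn a ts2))) by ring.
  pose proof (sumL_nonneg _ C1). pose proof (sumL_nonneg _ C2).
  apply (PERSP a FY Hc); try lra; split; auto; split; auto; lra.
Qed.

Lemma inT_tl k c w : inT (S k) c w -> inT k c (tl w) /\ sumL (tl w) <= sumL w.
Proof.
  intros H. destruct w as [|w0 w']; [destruct H as [H _]; simpl in H; lia|].
  apply inT_cons in H. destruct H as [H0 H]. cbn [tl]. split.
  - eapply inT_mono; [|exact H]. lra.
  - rewrite sumL_cons. lra.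
Qed.

Lemma convT_HZ a b FZ : convT b 1 FZ -> convT (a + S b) 1 (HZf FZ a).
Proof.
  intros Hc ts1 ts2 l H1 H2 Hl. unfold HZf.
  destruct (inT_split a (S b) ts1 H1) as [A1 [B1 [C1 [D1 E1]]]].
  destruct (inT_split a (S b) ts2 H2) as [A2 [B2 [C2 [D2 E2]]]].
  rewrite skipn_lc, tl_lc. rewrite lc_sum by lia.
  pose proof (sumL_nonneg _ C1). pose proof (sumL_nonneg _ C2).
  pose proof (sumL_nonneg _ D1). pose proof (sumL_nonneg _ D2).
  assert (T1 : inT b (sumL (skipn a ts1)) (tl (skipn a ts1))).
  { apply (inT_tl b). split; auto. split; auto. lra. }
  assert (T2 : inT b (sumL (skipn a ts2)) (tl (skipn a ts2))).
  { apply (inT_tl b). split; auto. split; auto. lra. }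
  apply (PERSP b FZ Hc); auto.
Qed.

Lemma convT_plus k s h1 h2 : convT k s h1 -> convT k s h2 -> convT k s (fun v => h1 v + h2 v).
Proof. intros A B u v l Hu Hv Hl. pose proof (A u v l Hu Hv Hl). pose proof (B u v l Hu Hv Hl). lra. Qed.

Lemma length_smap c u : length (smap c u) = length u.
Proof. unfold smap; apply length_map. Qed.

Lemma firstn_app_len (u w : list R) : firstn (length u) (u ++ w) = u.
Proof. induction u; simpl; [destruct w; auto|]. f_equal; auto. Qed.
Lemma skipn_app_len (u w : list R) : skipn (length u) (u ++ w) = w.
Proof. induction u; simpl; auto. Qed.

Lemma PW n x f k0 K' l0 L' ts : convex_on (in_simplex n x) f ->
  (forall i, In i (k0 :: K' ++ l0 :: L') -> (i <= n)%nat) ->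
  inT (length K' + S (length L')) 1 ts ->
  f (face_point (x k0) (map x (K' ++ l0 :: L')) ts) <=
  HYf (fun u => f (face_point (x k0) (map x K') u)) (length K') ts +
  HZf (fun u => f (face_point (x l0) (map x L') u)) (length K') ts.
Proof.
  intros Hf Hb Hts.
  set (a := length K') in *.
  destruct (inT_split a (S (length L')) ts Hts) as [A [B [C [D E]]]].
  assert (Ets : ts = firstn a ts ++ skipn a ts) by (symmetry; apply firstn_skipn).
  remember (firstn a ts) as u eqn:Eu. remember (skipn a ts) as w eqn:Ew.
  destruct w as [|w0 w']; [simpl in B; lia|].
  simpl in B. injection B as B.
  assert (Hw0 : 0 <= w0) by (apply D; left; auto).
  assert (Hw' : forall z, In z w' -> 0 <= z) by (intros; apply D; right; auto).
  set (sg := sumL (w0 :: w')).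
  assert (Hsg : sg = w0 + sumL w') by (unfold sg; rewrite sumL_cons; auto).
  pose proof (sumL_nonneg _ C) as SU. pose proof (sumL_nonneg _ Hw') as SW.
  fold sg in E.
  set (PY := face_point (x k0) (map x K') (smap (/ (1 - sg)) u)).
  set (PZ := face_point (x l0) (map x L') (smap (/ sg) w')).
  assert (InY : in_simplex n x PY).
  { apply FACE_IN. intros i Hi. apply Hb. simpl in Hi |- *. destruct Hi as [Hi|Hi]; auto.
    right. apply in_app_iff; auto.
    fold a. apply inT_sinv. lra. split; auto. split; auto. lra. }
  assert (InZ : in_simplex n x PZ).
  { apply FACE_IN. intros i Hi. apply Hb. simpl in Hi |- *. right. apply in_app_iff. right. auto.
    apply inT_sinv. lra. split; auto. split; auto. lra. }
  assert (V : face_point (x k0) (map x (K' ++ l0 :: L')) ts = vadd (vscale (1 - sg) PY) (vscale (1 - (1 - sg)) PZ)).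
  { apply vec_eq; intros j. unfold vadd, vscale, PY, PZ.
    assert (Lts : length ts = (a + S (length L'))%nat) by apply (inT_len _ _ _ Hts).
    rewrite !FP_bc by (rewrite ?length_map, ?length_smap, ?length_app; simpl; unfold a in *; lia).
    rewrite Ets. rewrite map_app. cbn [map bc].
    rewrite bc_app by (rewrite length_map, A; reflexivity).
    cbn [bc]. rewrite !sumL_smap, !bc_smap, sumL_app.
    fold sg.
    destruct (Req_dec (1 - sg) 0) as [E1|E1].
    - assert (Uz : forall z, In z u -> z = 0) by (apply (inT_zero a); split; auto; split; auto; lra).
      rewrite (bc_zero _ u) by auto.
      assert (sumL u = 0) by lra.
      rewrite E1. replace (1 - 0) with 1 by ring.
      destruct (Req_dec sg 0) as [E2|E2]; [lra|].
      replace sg with 1 by lra. rewrite Rinv_1. rewrite H.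
      replace w0 with (1 - sumL w') by lra. ring.
    - destruct (Req_dec sg 0) as [E2|E2].
      + assert (w0 = 0) by lra.
        assert (Wz : forall z, In z w' -> z = 0).
        { intros z Hz. pose proof (elem_le_sum w' z Hw' Hz). pose proof (Hw' z Hz). lra. }
        rewrite (bc_zero _ w') by auto. assert (sumL w' = 0) by lra.
        replace sg with 0 by lra. rewrite Rminus_0_r, Rinv_1, H. ring.
      + replace (1 - (1 - sg)) with sg by ring. replace w0 with (sg - sumL w') by lra.
        field. split; auto. }
  rewrite V. unfold HYf, HZf, persp. rewrite <- Eu, <- Ew. cbn [tl]. fold sg.
  eapply Rle_trans. apply Hf; auto. lra.
  right. fold PY PZ. ring.
Qed.

Lemma smap_smap c d u : smap c (smap d u) = smap (c * d) u.
Proof. unfold smap. rewrite map_map. apply map_ext. intros; ring. Qed.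
Lemma smap_1 u : smap 1 u = u.
Proof. unfold smap. rewrite <- (map_id u) at 2. apply map_ext. intros; ring. Qed.

Lemma convT_ext k s h1 h2 : (forall v, inT k s v -> h1 v = h2 v) -> convT k s h1 -> convT k s h2.
Proof.
  intros E Hc u v l Hu Hv Hl. rewrite <- !E; auto. apply inT_lc; auto.
Qed.

Lemma si_reflS k h s : simplex_int (S k) h s =
  simplex_int (S k) (fun v => h (removelast v ++ [s - sumL v])) s.
Proof. assert (E := si_refl k h s). replace (k + 1)%nat with (S k) in E by lia. exact E. Qed.

Lemma length_removelast (v : list R) : v <> [] -> length (removelast v) = pred (length v).
Proof.
  intros H. rewrite (app_removelast_last 0 H) at 2. rewrite length_app. simpl. lia.
Qed.

Lemma removelast_lc l u v : length u = length v -> removelast (lc l u v) = lc l (removelast u) (removelast v).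
Proof.
  revert v. induction u as [|a u IH]; intros v H; destruct v as [|b v]; simpl in H; try lia; auto.
  destruct u as [|a' u]; destruct v as [|b' v]; simpl in H; try lia; auto.
  change (removelast (lc l (a :: a' :: u) (b :: b' :: v))) with
    ((l * a + (1 - l) * b) :: removelast (lc l (a' :: u) (b' :: v))).
  rewrite IH by (simpl; lia). reflexivity.
Qed.

Lemma convT_reflS k s h : convT (S k) s h -> convT (S k) s (fun v => h (removelast v ++ [s - sumL v])).
Proof.
  intros Hc. apply (convT_comp (S k) s h (S k) s (fun v => removelast v ++ [s - sumL v])); auto.
  - intros v [L [P S]]. destruct v as [|v0 v']; [simpl in L; lia|].
    assert (Hv : v0 :: v' = removelast (v0 :: v') ++ [last (v0 :: v') 0]) by (apply app_removelast_last; discriminate).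
    assert (Hs : sumL (v0 :: v') = sumL (removelast (v0 :: v')) + last (v0 :: v') 0).
    { rewrite Hv at 1. rewrite sumL_app. unfold sumL; simpl; ring. }
    assert (Hin : forall z, In z (removelast (v0 :: v')) -> 0 <= z).
    { intros z Hz. apply P. rewrite Hv. apply in_app_iff; auto. }
    assert (Hl : 0 <= last (v0 :: v') 0). { apply P. rewrite Hv at 2. apply in_app_iff; right; left; auto. }
    split; [|split].
    + rewrite length_app, length_removelast by discriminate. simpl in *. lia.
    + intros z Hz. apply in_app_iff in Hz. destruct Hz as [Hz|[<-|[]]]; auto. lra.
    + rewrite sumL_app. change (sumL [s - sumL (v0 :: v')]) with (s - sumL (v0 :: v') + 0). lra.
  - intros u v l Hu Hv Hl. rewrite lc_app.
    + rewrite removelast_lc by (rewrite (inT_len _ _ _ Hu), (inT_len _ _ _ Hv); auto).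
      rewrite lc_sum by (rewrite (inT_len _ _ _ Hu), (inT_len _ _ _ Hv); auto).
      simpl. f_equal. f_equal. ring.
    + destruct u; destruct v; try (destruct Hu as [Hu _]; simpl in Hu; lia);
        try (destruct Hv as [Hv' _]; simpl in Hv'; lia).
      rewrite !length_removelast by discriminate. rewrite (inT_len _ _ _ Hu), (inT_len _ _ _ Hv). auto.
Qed.

Lemma homog FZ r w : HZf FZ 0 (smap r w) = r * HZf FZ 0 w.
Proof.
  unfold HZf, persp. simpl skipn. rewrite sumL_smap.
  assert (Etl : tl (smap r w) = smap r (tl w)) by (destruct w; reflexivity).
  rewrite Etl.
  destruct (Req_dec r 0) as [->|Hr]. ring.
  destruct (Req_dec (sumL w) 0) as [E|E]. rewrite E. ring.
  rewrite smap_smap. replace (/ (r * sumL w) * r) with (/ sumL w) by (field; auto). ring.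
Qed.

Lemma Hh_face FZ u : HZf FZ 0 ((1 - sumL u) :: u) = FZ u.
Proof.
  unfold HZf, persp. simpl skipn. rewrite sumL_cons. replace (1 - sumL u + sumL u) with 1 by ring.
  simpl tl. rewrite Rinv_1, smap_1. ring.
Qed.

Lemma ZT a b' FZ : convT b' 1 FZ ->
  simplex_int (a + S b') (HZf FZ a) 1 =
  INR (fact (S b')) / INR (fact (a + S b' + 1)) * simplex_int b' FZ 1.
Proof.
  intros Hc.
  set (Hh := HZf FZ 0).
  assert (HcH : convT (S b') 1 Hh) by (apply (convT_HZ 0 b' FZ Hc)).
  rewrite si_app.
  rewrite (si_ext_len a _ (fun u => simplex_int (S b') Hh (1 - sumL u))).
  2: { intros u Hu. apply si_ext_len. intros w _. unfold Hh, HZf. rewrite <- Hu, skipn_app_len. reflexivity. }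
  assert (Phi : forall r, simplex_int (S b') Hh r = r ^ (S b' + 1) * simplex_int (S b') Hh 1).
  { intros r. rewrite (si_ext_s _ _ r (r * 1)) by ring. rewrite si_scale.
    rewrite (si_ext_len _ _ (fun w => r * Hh w)) by (intros; apply homog).
    rewrite si_scal. rewrite pow_add. simpl (r ^ 1). ring. }
  rewrite (si_ext_len a _ (fun u => simplex_int (S b') Hh 1 * (1 - sumL u) ^ (S b' + 1))).
  2: { intros u _. rewrite Phi. ring. }
  rewrite si_scal, si_poly. rewrite pow1.
  assert (P1 : simplex_int (S b') Hh 1 = simplex_int b' FZ 1 / INR (S (S b'))).
  { rewrite <- (ROTN b' b' 1 Hh) by (auto; lra).
    rewrite si_reflS.
    set (G2 := fun v => Hh ((1 - sumL v) :: removelast v)).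
    rewrite (si_ext_len _ _ G2).
    2: { intros v Hv. unfold G2. assert (E := rotn_app (removelast v) [1 - sumL v]).
         rewrite length_removelast in E by (intros E'; subst; simpl in Hv; lia).
         rewrite Hv in E. simpl pred in E. rewrite E. reflexivity. }
    assert (HcG2 : convT (S b') 1 G2).
    { apply (convT_ext _ _ (fun v => (fun v' => Hh (rotn b' v')) (removelast v ++ [1 - sumL v]))).
      - intros v Hv. unfold G2. assert (E := rotn_app (removelast v) [1 - sumL v]).
        rewrite length_removelast in E by (intros E'; subst; destruct Hv as [Hv _]; simpl in Hv; lia).
        rewrite (inT_len _ _ _ Hv) in E. simpl pred in E. rewrite E. reflexivity.
      - apply (convT_reflS b' 1 (fun v' => Hh (rotn b' v'))). apply convT_rotn; auto. }
    rewrite <- (ROT1 b' 1 G2) by (auto; lra).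
    change (Defs.RInt (fun t => simplex_int b' (fun v => G2 (rot1 (t :: v))) (1 - t)) 0 1 =
            simplex_int b' FZ 1 / INR (S (S b'))).
    rewrite (DR_ext_all _ (fun t => (1 - t) ^ (S b') * simplex_int b' FZ 1)).
    - rewrite (DR_ext_all _ (fun t => simplex_int b' FZ 1 * (1 - t) ^ (S b'))) by (intros; ring).
      rewrite DR_scal, DR_pow_refl. rewrite pow1. field. apply not_0_INR. lia.
    - intros t. unfold G2. simpl rot1.
      rewrite (si_ext_len _ _ (fun u => Hh ((1 - t - sumL u) :: u))).
      2: { intros u _. rewrite removelast_last, sumL_app. unfold sumL at 2; simpl.
           f_equal. f_equal. ring. }
      rewrite (si_ext_s _ _ (1 - t) ((1 - t) * 1)) by ring. rewrite si_scale.
      rewrite (si_ext_len _ _ (fun u => (1 - t) * FZ u)).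
      2: { intros u _. rewrite <- (Hh_face FZ u). unfold Hh. rewrite <- homog. f_equal.
           change (map (Rmult (1 - t)) u) with (smap (1 - t) u). rewrite sumL_smap.
           unfold smap. simpl map. f_equal. ring. }
      rewrite si_scal. simpl (_ ^ S b'). ring. }
  rewrite P1.
  replace (a + (S b' + 1))%nat with (a + S b' + 1)%nat by lia.
  replace (fact (S b' + 1)) with (S (S b') * fact (S b'))%nat by (replace (S b' + 1)%nat with (S (S b')) by lia; reflexivity).
  rewrite mult_INR. field. split; apply Rgt_not_eq; [apply INR_fact_pos| apply lt_0_INR; lia].
Qed.

Lemma YT a b' FY : convT a 1 FY ->
  simplex_int (a + S b') (HYf FY a) 1 =
  INR (fact (S a)) / INR (fact (a + S b' + 1)) * simplex_int a FY 1.
Proof.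
  intros Hc.
  assert (HcY : convT (S (a + b')) 1 (HYf FY a)).
  { replace (S (a + b')) with (a + S b')%nat by lia. apply convT_HY; auto. }
  replace (a + S b')%nat with (S (a + b')) by lia.
  rewrite <- (ROTN (S b') (a + b') 1 (HYf FY a)) by (auto; lra).
  replace (S (a + b')) with (S b' + a)%nat by lia.
  rewrite si_app.
  rewrite (si_ext_len _ _ (fun w => (1 - sumL w) ^ (S a) * simplex_int a FY 1)).
  - rewrite (si_ext_len _ _ (fun w => simplex_int a FY 1 * (1 - sumL w) ^ (S a))) by (intros; ring).
    rewrite si_scal, si_poly, pow1.
    replace (S b' + S a)%nat with (S b' + a + 1)%nat by lia. field. apply Rgt_not_eq, INR_fact_pos.
  - intros w Hw.
    rewrite (si_ext_len _ _ (fun u => persp FY (1 - sumL w) u)).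
    2: { intros u Hu. rewrite <- Hw. rewrite rotn_app. unfold HYf. rewrite <- Hu.
         rewrite firstn_app_len, skipn_app_len. reflexivity. }
    unfold persp. set (c := 1 - sumL w). rewrite si_scal.
    destruct (Req_dec c 0) as [E|E].
    + rewrite E. simpl. ring.
    + rewrite (si_ext_s _ _ c (c * 1)) by ring. rewrite si_scale.
      rewrite (si_ext_len _ _ FY).
      2: { intros u _. change (map (Rmult c) u) with (smap c u). rewrite smap_smap.
           replace (/ c * c) with 1 by (field; auto). rewrite smap_1. reflexivity. }
      simpl. ring.
Qed.

Theorem lemma2 (n : nat) (x : nat -> vec) (f : vec -> R) (K L : list nat) :
  (1 <= n)%nat ->
  (forall i j, (n <= j)%nat -> x i j = 0) ->
  affinely_independent n x ->
  convex_on (in_simplex n x) f ->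
  NoDup K -> NoDup L -> K <> [] -> L <> [] ->
  (forall i, In i K -> (i <= n)%nat) ->
  (forall i, In i L -> (i <= n)%nat) ->
  (forall i, In i K -> ~ In i L) ->
  Avg f (map x (K ++ L)) <=
    INR (length K) / INR (length K + length L) * Avg f (map x K)
  + INR (length L) / INR (length K + length L) * Avg f (map x L).
Proof.
  intros Hn Hx Hai Hf HK HL HK0 HL0 HKb HLb Hdis.
  destruct K as [|k0 K']; [congruence|]. destruct L as [|l0 L']; [congruence|].
  set (a := length K'). set (b' := length L').
  assert (Hb : forall i, In i (k0 :: K' ++ l0 :: L') -> (i <= n)%nat).
  { intros i Hi. simpl in Hi. destruct Hi as [<-|Hi]. apply HKb; left; auto.
    apply in_app_iff in Hi. destruct Hi as [Hi|Hi]. apply HKb; right; auto. apply HLb; auto. }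
  set (FY := fun u => f (face_point (x k0) (map x K') u)).
  set (FZ := fun u => f (face_point (x l0) (map x L') u)).
  set (FJ := fun ts => f (face_point (x k0) (map x (K' ++ l0 :: L')) ts)).
  assert (CY : convT a 1 FY).
  { apply (conv_face n x f k0 K' Hf). intros i Hi. apply Hb. simpl in Hi |- *. destruct Hi; auto.
    right; apply in_app_iff; auto. }
  assert (CZ : convT b' 1 FZ).
  { apply (conv_face n x f l0 L' Hf). intros i Hi. apply Hb. simpl. right. apply in_app_iff. right. auto. }
  assert (CJ : convT (a + S b') 1 FJ).
  { assert (E : length (K' ++ l0 :: L') = (a + S b')%nat) by (rewrite length_app; simpl; auto).
    rewrite <- E. apply (conv_face n x f k0 (K' ++ l0 :: L') Hf); auto. }
  assert (CS : convT (a + S b') 1 (fun v => HYf FY a v + HZf FZ a v)).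
  { apply convT_plus. apply convT_HY; auto. apply convT_HZ; auto. }
  assert (Main : simplex_int (a + S b') FJ 1 <=
     INR (fact (S a)) / INR (fact (a + S b' + 1)) * simplex_int a FY 1 +
     INR (fact (S b')) / INR (fact (a + S b' + 1)) * simplex_int b' FZ 1).
  { rewrite <- YT, <- ZT by auto.
    destruct (GI_lin (a + S b') (HYf FY a) (HZf FZ a) 1 1 1 ltac:(lra)) as [G E].
    apply CT; [lra|]. apply convT_HY; auto. apply CT; [lra|]. apply convT_HZ; auto.
    rewrite !Rmult_1_l in E. rewrite <- E.
    rewrite (si_ext_len _ (fun v => 1 * HYf FY a v + 1 * HZf FZ a v) (fun v => HYf FY a v + HZf FZ a v))
      by (intros; ring).
    apply GI_mono; try lra.
    - apply CT; auto; lra.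
    - apply CT; auto; lra.
    - intros v Hv. unfold FJ, FY, FZ, a. apply PW with n; auto. }
  unfold Avg. simpl (map x ((k0 :: K') ++ l0 :: L')).
  cbn [map length]. rewrite !length_map, length_app. cbn [length]. fold a b'.
  fold FJ FY FZ.
  set (SJ := simplex_int (a + S b') FJ 1) in *.
  set (JY := simplex_int a FY 1) in *. set (JZ := simplex_int b' FZ 1) in *.
  replace (a + S b' + 1)%nat with (S (a + S b')) in Main by lia.
  replace (S a + S b')%nat with (S (a + S b')) by lia.
  rewrite !fact_simpl in Main. rewrite !mult_INR in Main.
  pose proof (INR_fact_pos (a + S b')) as P1. pose proof (INR_fact_pos a) as P2.
  pose proof (INR_fact_pos b') as P3.
  assert (P4 : 0 < INR (S (a + S b'))) by (apply lt_0_INR; lia).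
  apply Rle_trans with (INR (fact (a + S b')) * (INR (S a) * INR (fact a) / (INR (S (a + S b')) * INR (fact (a + S b'))) * JY +
     INR (S b') * INR (fact b') / (INR (S (a + S b')) * INR (fact (a + S b'))) * JZ)).
  - apply Rmult_le_compat_l; lra.
  - right. field. lra.
Qed.
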